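(* Let $K_{3,3}$ be the complete bipartite graph on vertex set $[6]$ with parts $\{1,3,6\}$ and $\{2,4,5\}$, i.e. with edges $(1,2),(1,4),(1,5),(2,3),(2,6),(3,4),(3,5),(4,6),(5,6)$. Then the abelian group $H_1(K_{3,3};\mathbb Z)$ contains an element of order $2$ (i.e. it has $\mathbb Z_2$-torsion).
   Context: Let $G$ be a simple graph with vertex set $[n]$; an edge $\{i,j\}$ with $i<j$ is written $(i,j)$, and $E(G)$ is totally ordered lexicographically. For $F\subseteq E(G)$ let $\beta(F)$ be the partition of $[n]$ into the vertex sets of the connected components of $([n],F)$, and $\mathfrak S_{\beta(F)}\subseteq\mathfrak S_n$ the subgroup of permutations mapping each block to itself. For a commutative ring $R$ let $a_F=\sum_{\sigma\in\mathfrak S_{\beta(F)}}\sigma\in R[\mathfrak S_n]$ and $\mathcal M_F=R[\mathfrak S_n]a_F$; for $e\in F$, $\mathcal M_F\subseteq\mathcal M_{F\setminus e}$. The chain complex is $C_i(G;R)=\bigoplus_{|F|=i}\mathcal M_F$ with $d_i(x)=\sum_{e\in F}(-1)^{|\{f\in F: f<e\}|}\iota_{F,F\setminus e}(x)$ for $x\in\mathcal M_F$, $\iota$ the inclusion into the summand $\mathcal M_{F\setminus e}$; $H_i(G;R)=\ker d_i/\operatorname{im}d_{i+1}$ (the $q$-degree zero chromatic symmetric homology). *)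

(* Defs.v *)
From HB Require Import structures.
From mathcomp Require Import all_boot all_order all_fingroup all_algebra.
Set Implicit Arguments. Unset Strict Implicit. Unset Printing Implicit Defensive.
Import GRing.Theory.
Local Open Scope ring_scope.

(* Vertices are 'I_n (vertex k+1 of the paper is k here).  A graph is given
   by its edge list E, listed in increasing lexicographic order; an edge
   subset F is a set of indices into E, so the order on edges is the order
   of indices. *)

(* The group ring Z[S_n]: integer-valued functions on permutations. *)
Definition ZS (n : nat) := {ffun {perm 'I_n} -> int}.

Definition zmul n (a b : ZS n) : ZS n :=
  [ffun s => \sum_(t : {perm 'I_n}) a t * b (t^-1 * s)%g].

Section Graph.
Variables (n : nat) (E : seq ('I_n * 'I_n)).

Definition edgeset := {set 'I_(size E)}.

Definition edge_rel (F : edgeset) : rel 'I_n :=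
  fun u v => [exists e in F, (nth (u, v) E e == (u, v)) || (nth (u, v) E e == (v, u))].

(* the block of beta(F) containing x: its connected component in ([n],F) *)
Definition block (F : edgeset) (x : 'I_n) : {set 'I_n} :=
  [set y | connect (edge_rel F) x y].

Definition in_Sbeta (F : edgeset) (s : {perm 'I_n}) : bool :=
  [forall x, s @: block F x == block F x].

Definition aF (F : edgeset) : ZS n :=
  [ffun s => if in_Sbeta F s then 1 else 0].

Definition inM (F : edgeset) (x : ZS n) : Prop := exists y : ZS n, x = zmul y (aF F).

(* ambient group containing every C_i: families indexed by edge subsets *)
Definition chain := {ffun edgeset -> ZS n}.

(* c lies in C_i = (+)_{|F| = i} M_F *)
Definition is_chain (i : nat) (c : chain) : Prop :=
  (forall F : edgeset, #|F| <> i -> c F = 0) /\ (forall F : edgeset, inM F (c F)).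

Definition bd (c : chain) : chain :=
  [ffun F' : edgeset => \sum_(e : 'I_(size E) | e \notin F')
      (c (e |: F')) *~ ((-1) ^+ #|[set f in e |: F' | (f < e)%N]|)].

Definition H1_has_2torsion : Prop :=
  exists x : chain, [/\ is_chain 1 x, bd x = 0,
     ~ (exists y : chain, is_chain 2 y /\ bd y = x) &
     exists y : chain, is_chain 2 y /\ bd y = x *+ 2].
End Graph.

Definition K33 : seq ('I_6 * 'I_6) :=
  [:: (inord 0, inord 1); (inord 0, inord 3); (inord 0, inord 4);
      (inord 1, inord 2); (inord 1, inord 5); (inord 2, inord 3);
      (inord 2, inord 4); (inord 3, inord 5); (inord 4, inord 5)].

(* Main.v *)
Require Import Defs.
From mathcomp Require Import all_boot all_order all_fingroup all_algebra.
Set Implicit Arguments. Unset Strict Implicit. Unset Printing Implicit Defensive.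
Import GRing.Theory.
Local Open Scope ring_scope.
Definition WLd : seq (nat * int * seq nat) := [::
(0, Negz 0, [:: 0; 1; 2; 3; 4; 5]);
(0, Negz 0, [:: 3; 0; 2; 1; 4; 5]);
(0, Negz 0, [:: 0; 3; 2; 1; 4; 5]);
(0, Negz 0, [:: 0; 3; 1; 2; 4; 5]);
(0, Negz 0, [:: 3; 0; 1; 2; 4; 5]);
(0, Negz 0, [:: 0; 1; 3; 2; 4; 5]);
(0, Negz 0, [:: 0; 4; 1; 2; 3; 5]);
(0, Negz 0, [:: 3; 4; 0; 2; 1; 5]);
(0, Negz 0, [:: 0; 4; 3; 2; 1; 5]);
(0, Negz 1, [:: 3; 4; 0; 1; 2; 5]);
(0, Negz 0, [:: 0; 4; 1; 3; 2; 5]);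
(0, Negz 0, [:: 0; 4; 3; 1; 2; 5]);
(0, Negz 0, [:: 0; 4; 5; 1; 2; 3]);
(0, Negz 1, [:: 3; 4; 5; 0; 2; 1]);
(0, Negz 0, [:: 0; 4; 5; 3; 2; 1]);
(0, Negz 0, [:: 3; 4; 5; 0; 1; 2]);
(0, Negz 0, [:: 0; 4; 5; 1; 3; 2]);
(0, Negz 0, [:: 0; 4; 5; 3; 1; 2]);
(0, Negz 1, [:: 2; 4; 5; 0; 1; 3]);
(0, Negz 0, [:: 2; 4; 5; 0; 3; 1]);
(0, Negz 0, [:: 2; 4; 5; 3; 0; 1]);
(0, Negz 0, [:: 2; 5; 0; 1; 3; 4]);
(0, Negz 0, [:: 2; 5; 0; 3; 1; 4]);
(0, Negz 0, [:: 2; 5; 3; 0; 1; 4]);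
(0, Negz 1, [:: 2; 5; 0; 1; 4; 3]);
(0, Negz 0, [:: 2; 5; 0; 3; 4; 1]);
(0, Negz 0, [:: 2; 5; 3; 0; 4; 1]);
(0, Negz 0, [:: 2; 5; 3; 4; 0; 1]);
(0, Negz 1, [:: 2; 5; 0; 4; 1; 3]);
(0, Negz 0, [:: 2; 5; 0; 4; 3; 1]);
(0, Negz 1, [:: 4; 0; 1; 2; 3; 5]);
(0, Negz 0, [:: 4; 0; 3; 2; 1; 5]);
(0, Negz 0, [:: 4; 3; 0; 2; 1; 5]);
(0, Negz 1, [:: 4; 0; 1; 3; 2; 5]);
(0, Negz 0, [:: 4; 0; 3; 1; 2; 5]);
(0, Negz 0, [:: 4; 3; 0; 1; 2; 5]);
(0, Negz 1, [:: 4; 0; 2; 3; 1; 5]);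
(0, Negz 0, [:: 4; 3; 2; 0; 1; 5]);
(0, Negz 0, [:: 4; 0; 2; 1; 3; 5]);
(0, Negz 0, [:: 4; 0; 5; 1; 3; 2]);
(0, Negz 0, [:: 4; 3; 5; 0; 1; 2]);
(0, Negz 0, [:: 4; 0; 5; 3; 1; 2]);
(0, Negz 1, [:: 4; 0; 5; 2; 1; 3]);
(0, Negz 1, [:: 4; 0; 5; 2; 3; 1]);
(0, Negz 0, [:: 4; 3; 5; 2; 0; 1]);
(0, Negz 0, [:: 4; 2; 0; 1; 3; 5]);
(0, Negz 0, [:: 4; 2; 0; 3; 1; 5]);
(0, Negz 0, [:: 4; 2; 3; 0; 1; 5]);
(0, Negz 0, [:: 4; 2; 5; 0; 1; 3]);
(0, Negz 0, [:: 4; 2; 5; 0; 3; 1]);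
(0, Negz 0, [:: 4; 2; 5; 3; 0; 1]);
(0, Negz 1, [:: 4; 5; 0; 1; 2; 3]);
(0, Negz 0, [:: 4; 5; 3; 0; 2; 1]);
(0, Negz 1, [:: 4; 5; 0; 3; 2; 1]);
(0, Negz 0, [:: 4; 5; 3; 2; 0; 1]);
(0, Negz 1, [:: 4; 5; 0; 2; 1; 3]);
(0, Negz 1, [:: 4; 5; 0; 2; 3; 1]);
(0, Negz 0, [:: 0; 4; 2; 3; 1; 5]);
(0, Negz 0, [:: 0; 1; 4; 2; 3; 5]);
(0, Negz 0, [:: 0; 1; 5; 2; 3; 4]);
(0, Negz 0, [:: 0; 4; 5; 2; 3; 1]);
(0, Negz 0, [:: 0; 1; 5; 2; 4; 3]);
(0, Negz 0, [:: 0; 4; 5; 2; 1; 3]);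
(0, Negz 0, [:: 2; 0; 1; 3; 4; 5]);
(0, Negz 0, [:: 2; 4; 0; 3; 1; 5]);
(0, Negz 0, [:: 2; 0; 4; 3; 1; 5]);
(0, Negz 0, [:: 2; 4; 0; 1; 3; 5]);
(0, Negz 0, [:: 2; 0; 1; 4; 3; 5]);
(0, Negz 0, [:: 2; 0; 4; 1; 3; 5]);
(0, Negz 0, [:: 2; 0; 5; 1; 4; 3]);
(0, Negz 0, [:: 2; 0; 5; 4; 1; 3]);
(0, Negz 0, [:: 2; 3; 0; 1; 4; 5]);
(0, Negz 0, [:: 2; 3; 0; 4; 1; 5]);
(0, Negz 0, [:: 2; 3; 4; 0; 1; 5]);
(0, Negz 0, [:: 2; 5; 4; 0; 1; 3]);
(0, Negz 0, [:: 3; 0; 2; 4; 1; 5]);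
(0, Negz 0, [:: 3; 4; 2; 0; 1; 5]);
(0, Negz 0, [:: 3; 0; 5; 4; 2; 1]);
(0, Negz 0, [:: 3; 0; 5; 1; 2; 4]);
(0, Negz 0, [:: 3; 0; 5; 2; 1; 4]);
(0, Negz 0, [:: 3; 0; 5; 2; 4; 1]);
(0, Negz 0, [:: 3; 4; 5; 2; 0; 1]);
(0, Negz 1, [:: 3; 5; 0; 4; 2; 1]);
(0, Negz 0, [:: 3; 5; 0; 1; 2; 4]);
(0, Negz 0, [:: 3; 5; 4; 0; 2; 1]);
(0, Negz 0, [:: 3; 5; 4; 2; 0; 1]);
(0, Negz 0, [:: 3; 5; 0; 2; 1; 4]);
(0, Negz 1, [:: 3; 5; 0; 2; 4; 1]);
(0, Negz 0, [:: 3; 5; 2; 0; 1; 4]);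
(0, Negz 1, [:: 3; 5; 2; 0; 4; 1]);
(0, Negz 1, [:: 3; 5; 2; 4; 0; 1]);
(0, Negz 0, [:: 2; 4; 3; 0; 1; 5]);
(0, Negz 0, [:: 3; 2; 0; 4; 1; 5]);
(0, Negz 0, [:: 3; 0; 1; 4; 2; 5]);
(0, Negz 0, [:: 3; 2; 5; 0; 1; 4]);
(0, Negz 0, [:: 3; 5; 0; 1; 4; 2]);
(0, Negz 0, [:: 3; 5; 0; 4; 1; 2]);
(0, Negz 0, [:: 4; 0; 5; 3; 2; 1]);
(0, Negz 0, [:: 4; 3; 5; 0; 2; 1]);
(0, Negz 0, [:: 4; 5; 2; 0; 1; 3]);
(0, Negz 0, [:: 4; 5; 0; 1; 3; 2]);
(0, Negz 0, [:: 4; 5; 2; 0; 3; 1]);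
(0, Negz 0, [:: 4; 5; 2; 3; 0; 1]);
(0, Negz 0, [:: 4; 5; 0; 3; 1; 2]);
(0, Negz 0, [:: 3; 2; 0; 5; 1; 4]);
(0, Negz 0, [:: 3; 2; 0; 1; 5; 4]);
(0, Negz 0, [:: 2; 3; 5; 0; 4; 1]);
(0, Negz 0, [:: 3; 2; 5; 0; 4; 1]);
(0, Negz 0, [:: 4; 0; 5; 1; 2; 3]);
(0, Negz 0, [:: 3; 2; 0; 1; 4; 5]);
(1, Negz 0, [:: 0; 4; 1; 2; 3; 5]);
(1, Negz 0, [:: 0; 4; 1; 3; 2; 5]);
(1, Negz 0, [:: 0; 4; 3; 1; 2; 5]);
(1, Negz 0, [:: 0; 4; 5; 1; 2; 3]);
(1, Negz 0, [:: 0; 4; 5; 3; 2; 1]);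
(1, Negz 0, [:: 0; 4; 5; 1; 3; 2]);
(1, Negz 1, [:: 4; 0; 1; 2; 3; 5]);
(1, Negz 0, [:: 4; 0; 1; 3; 2; 5]);
(1, Negz 0, [:: 4; 0; 2; 3; 1; 5]);
(1, Negz 0, [:: 4; 0; 2; 1; 3; 5]);
(1, Negz 0, [:: 4; 0; 5; 1; 3; 2]);
(1, Negz 0, [:: 4; 0; 5; 2; 3; 1]);
(1, Negz 0, [:: 4; 5; 0; 1; 2; 3]);
(1, Negz 0, [:: 4; 5; 0; 3; 2; 1]);
(1, Negz 0, [:: 4; 5; 0; 2; 1; 3]);
(1, Negz 0, [:: 4; 5; 0; 2; 3; 1]);
(1, Negz 0, [:: 0; 1; 2; 4; 3; 5]);
(1, Negz 0, [:: 0; 1; 5; 2; 3; 4]);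
(1, Negz 0, [:: 0; 1; 5; 2; 4; 3]);
(1, Negz 0, [:: 4; 1; 5; 0; 2; 3]);
(1, Negz 0, [:: 0; 1; 5; 3; 2; 4]);
(1, Negz 0, [:: 0; 1; 5; 4; 2; 3]);
(1, Negz 0, [:: 0; 4; 2; 1; 3; 5]);
(1, Negz 0, [:: 0; 3; 2; 4; 1; 5]);
(1, Negz 0, [:: 0; 4; 2; 3; 1; 5]);
(1, Negz 0, [:: 0; 3; 4; 1; 2; 5]);
(1, Negz 0, [:: 0; 3; 5; 1; 4; 2]);
(1, Negz 0, [:: 0; 3; 5; 2; 1; 4]);
(1, Negz 0, [:: 0; 4; 5; 2; 1; 3]);
(1, Negz 0, [:: 0; 4; 5; 2; 3; 1]);
(1, Negz 0, [:: 0; 3; 5; 2; 4; 1]);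
(1, Negz 1, [:: 4; 0; 5; 3; 2; 1]);
(1, Negz 0, [:: 0; 3; 5; 4; 2; 1]);
(1, Negz 0, [:: 0; 5; 1; 2; 3; 4]);
(1, Negz 1, [:: 0; 5; 1; 2; 4; 3]);
(1, Negz 0, [:: 0; 5; 1; 3; 2; 4]);
(1, Negz 1, [:: 0; 5; 1; 4; 2; 3]);
(1, Negz 0, [:: 4; 5; 2; 1; 0; 3]);
(1, Negz 0, [:: 0; 5; 2; 1; 3; 4]);
(1, Negz 1, [:: 0; 5; 2; 1; 4; 3]);
(1, Negz 0, [:: 0; 5; 2; 3; 1; 4]);
(1, Negz 0, [:: 4; 5; 2; 0; 1; 3]);
(1, Negz 1, [:: 0; 5; 2; 4; 1; 3]);
(1, Negz 1, [:: 0; 5; 2; 3; 4; 1]);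
(1, Negz 0, [:: 4; 5; 2; 0; 3; 1]);
(1, Negz 1, [:: 0; 5; 2; 4; 3; 1]);
(1, Negz 0, [:: 0; 5; 4; 1; 2; 3]);
(1, Negz 0, [:: 0; 5; 3; 1; 2; 4]);
(1, Negz 0, [:: 0; 5; 4; 2; 1; 3]);
(1, Negz 0, [:: 0; 5; 3; 2; 1; 4]);
(1, Negz 0, [:: 0; 5; 4; 2; 3; 1]);
(1, Negz 1, [:: 0; 5; 3; 2; 4; 1]);
(1, Negz 1, [:: 0; 5; 3; 4; 2; 1]);
(1, Negz 0, [:: 0; 5; 4; 3; 2; 1]);
(1, Negz 0, [:: 2; 0; 1; 3; 4; 5]);
(1, Negz 0, [:: 2; 4; 1; 0; 3; 5]);
(1, Negz 0, [:: 2; 0; 1; 4; 3; 5]);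
(1, Negz 0, [:: 2; 0; 4; 1; 3; 5]);
(1, Negz 0, [:: 2; 0; 3; 1; 4; 5]);
(1, Negz 0, [:: 2; 4; 0; 1; 3; 5]);
(1, Negz 0, [:: 2; 4; 0; 3; 1; 5]);
(1, Negz 0, [:: 2; 0; 4; 3; 1; 5]);
(1, Negz 0, [:: 2; 0; 3; 4; 1; 5]);
(1, Negz 0, [:: 0; 2; 1; 4; 3; 5]);
(1, Negz 0, [:: 0; 1; 3; 4; 2; 5]);
(1, Negz 0, [:: 0; 2; 3; 4; 1; 5]);
(1, Negz 0, [:: 0; 2; 5; 1; 3; 4]);
(1, Negz 0, [:: 0; 2; 5; 3; 1; 4]);
(1, Negz 0, [:: 0; 3; 1; 4; 2; 5]);
(1, Negz 0, [:: 0; 3; 5; 1; 2; 4]);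
(1, Negz 0, [:: 0; 5; 1; 3; 4; 2]);
(1, Negz 0, [:: 0; 5; 1; 4; 3; 2]);
(1, Negz 0, [:: 0; 5; 3; 1; 4; 2]);
(1, Negz 0, [:: 0; 5; 3; 4; 1; 2]);
(1, Negz 0, [:: 4; 5; 0; 1; 3; 2]);
(1, Negz 0, [:: 4; 5; 0; 3; 1; 2]);
(1, Negz 0, [:: 0; 2; 1; 3; 5; 4]);
(1, Negz 0, [:: 0; 2; 1; 5; 3; 4]);
(1, Negz 0, [:: 0; 2; 3; 5; 1; 4]);
(1, Negz 0, [:: 0; 2; 3; 1; 5; 4]);
(1, Negz 0, [:: 0; 2; 5; 1; 4; 3]);
(1, Negz 0, [:: 2; 0; 5; 1; 4; 3]);
(1, Negz 0, [:: 2; 0; 5; 3; 4; 1]);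
(1, Negz 0, [:: 0; 2; 5; 3; 4; 1]);
(1, Negz 0, [:: 4; 0; 5; 1; 2; 3]);
(1, Negz 0, [:: 0; 2; 1; 3; 4; 5]);
(1, Negz 0, [:: 0; 2; 3; 1; 4; 5]);
(2, Posz 1, [:: 0; 4; 2; 3; 1; 5]);
(2, Negz 0, [:: 0; 1; 4; 2; 3; 5]);
(2, Posz 1, [:: 0; 4; 5; 2; 3; 1]);
(2, Posz 1, [:: 0; 4; 5; 2; 1; 3]);
(2, Posz 1, [:: 2; 0; 4; 3; 1; 5]);
(2, Posz 1, [:: 2; 0; 1; 4; 3; 5]);
(2, Negz 0, [:: 2; 0; 5; 1; 4; 3]);
(2, Posz 1, [:: 2; 3; 0; 1; 4; 5]);
(2, Posz 1, [:: 2; 3; 0; 4; 1; 5]);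
(2, Posz 1, [:: 2; 3; 1; 0; 4; 5]);
(2, Posz 1, [:: 3; 0; 2; 4; 1; 5]);
(2, Posz 1, [:: 3; 0; 2; 1; 4; 5]);
(2, Posz 1, [:: 3; 1; 2; 0; 4; 5]);
(2, Posz 1, [:: 3; 1; 5; 0; 2; 4]);
(2, Posz 1, [:: 3; 0; 5; 4; 2; 1]);
(2, Posz 1, [:: 3; 1; 5; 2; 0; 4]);
(2, Posz 1, [:: 3; 0; 5; 2; 1; 4]);
(2, Posz 1, [:: 3; 0; 5; 2; 4; 1]);
(2, Posz 1, [:: 3; 5; 0; 1; 2; 4]);
(2, Posz 1, [:: 3; 5; 0; 4; 2; 1]);
(2, Posz 1, [:: 3; 5; 1; 0; 2; 4]);
(2, Posz 1, [:: 3; 5; 1; 2; 0; 4]);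
(2, Posz 1, [:: 3; 5; 0; 2; 1; 4]);
(2, Posz 1, [:: 3; 5; 0; 2; 4; 1]);
(2, Posz 1, [:: 3; 5; 2; 0; 1; 4]);
(2, Posz 1, [:: 3; 5; 2; 0; 4; 1]);
(2, Posz 1, [:: 3; 5; 2; 1; 0; 4]);
(2, Negz 0, [:: 0; 1; 5; 4; 2; 3]);
(2, Negz 0, [:: 0; 3; 1; 2; 4; 5]);
(2, Negz 0, [:: 0; 5; 1; 2; 3; 4]);
(2, Negz 0, [:: 0; 5; 1; 2; 4; 3]);
(2, Negz 0, [:: 0; 5; 1; 3; 2; 4]);
(2, Negz 0, [:: 0; 5; 1; 4; 2; 3]);
(2, Negz 0, [:: 0; 5; 2; 1; 4; 3]);
(2, Negz 0, [:: 0; 5; 2; 4; 1; 3]);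
(2, Negz 0, [:: 0; 2; 1; 3; 4; 5]);
(2, Negz 0, [:: 0; 1; 3; 2; 4; 5]);
(2, Negz 0, [:: 0; 2; 3; 1; 4; 5]);
(2, Negz 0, [:: 0; 1; 3; 4; 2; 5]);
(2, Negz 0, [:: 0; 2; 3; 4; 1; 5]);
(2, Negz 0, [:: 0; 2; 4; 1; 3; 5]);
(2, Negz 0, [:: 0; 2; 5; 1; 3; 4]);
(2, Negz 0, [:: 0; 2; 5; 4; 1; 3]);
(2, Negz 0, [:: 0; 3; 1; 4; 2; 5]);
(2, Negz 0, [:: 0; 3; 5; 1; 2; 4]);
(2, Negz 0, [:: 0; 5; 1; 3; 4; 2]);
(2, Negz 0, [:: 0; 5; 1; 4; 3; 2]);
(2, Negz 0, [:: 0; 5; 3; 1; 4; 2]);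
(2, Negz 0, [:: 0; 5; 3; 4; 1; 2]);
(2, Negz 0, [:: 2; 0; 5; 1; 3; 4]);
(2, Negz 0, [:: 0; 1; 4; 3; 2; 5]);
(2, Negz 0, [:: 0; 4; 1; 3; 2; 5]);
(2, Negz 0, [:: 0; 2; 5; 1; 4; 3]);
(2, Negz 0, [:: 0; 4; 5; 1; 2; 3]);
(3, Posz 1, [:: 0; 3; 1; 2; 4; 5]);
(3, Posz 1, [:: 1; 3; 2; 0; 4; 5]);
(3, Posz 1, [:: 1; 3; 0; 2; 4; 5]);
(3, Posz 1, [:: 1; 4; 0; 3; 2; 5]);
(3, Posz 1, [:: 1; 4; 2; 3; 0; 5]);
(3, Posz 1, [:: 0; 4; 1; 3; 2; 5]);
(3, Posz 1, [:: 1; 4; 3; 0; 2; 5]);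
(3, Posz 1, [:: 0; 4; 3; 1; 2; 5]);
(3, Posz 1, [:: 1; 4; 3; 2; 0; 5]);
(3, Posz 1, [:: 1; 4; 5; 2; 0; 3]);
(3, Posz 1, [:: 0; 4; 5; 1; 2; 3]);
(3, Posz 1, [:: 1; 4; 5; 0; 2; 3]);
(3, Posz 1, [:: 1; 4; 5; 2; 3; 0]);
(3, Posz 1, [:: 0; 4; 5; 1; 3; 2]);
(3, Posz 1, [:: 1; 4; 5; 0; 3; 2]);
(3, Posz 1, [:: 1; 4; 5; 3; 0; 2]);
(3, Posz 1, [:: 1; 4; 5; 3; 2; 0]);
(3, Posz 1, [:: 0; 4; 5; 3; 1; 2]);
(3, Posz 1, [:: 3; 1; 2; 4; 0; 5]);
(3, Posz 1, [:: 3; 1; 0; 4; 2; 5]);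
(3, Posz 1, [:: 3; 0; 1; 4; 2; 5]);
(3, Posz 1, [:: 3; 1; 5; 0; 2; 4]);
(3, Posz 1, [:: 3; 1; 5; 2; 0; 4]);
(3, Posz 1, [:: 3; 0; 5; 1; 2; 4]);
(3, Posz 1, [:: 3; 4; 0; 1; 2; 5]);
(3, Posz 1, [:: 3; 4; 1; 0; 2; 5]);
(3, Posz 1, [:: 3; 4; 1; 2; 0; 5]);
(3, Posz 1, [:: 3; 4; 5; 0; 1; 2]);
(3, Posz 1, [:: 3; 4; 5; 1; 0; 2]);
(3, Posz 1, [:: 3; 4; 5; 1; 2; 0]);
(3, Posz 1, [:: 3; 5; 1; 0; 4; 2]);
(3, Posz 1, [:: 3; 5; 1; 2; 4; 0]);
(3, Posz 1, [:: 3; 5; 0; 1; 4; 2]);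
(3, Posz 1, [:: 3; 5; 1; 4; 0; 2]);
(3, Posz 1, [:: 3; 5; 1; 4; 2; 0]);
(3, Posz 1, [:: 3; 5; 0; 4; 1; 2]);
(3, Posz 1, [:: 4; 0; 1; 3; 2; 5]);
(3, Posz 1, [:: 4; 1; 2; 3; 0; 5]);
(3, Posz 1, [:: 4; 1; 0; 3; 2; 5]);
(3, Posz 1, [:: 4; 1; 5; 2; 3; 0]);
(3, Posz 1, [:: 4; 0; 5; 1; 3; 2]);
(3, Posz 1, [:: 4; 1; 5; 0; 3; 2]);
(3, Posz 1, [:: 4; 1; 5; 3; 2; 0]);
(3, Posz 1, [:: 4; 1; 5; 3; 0; 2]);
(3, Posz 1, [:: 4; 0; 5; 3; 1; 2]);
(3, Posz 1, [:: 4; 3; 5; 0; 1; 2]);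
(3, Posz 1, [:: 4; 3; 5; 1; 0; 2]);
(3, Posz 1, [:: 4; 3; 5; 1; 2; 0]);
(3, Posz 1, [:: 4; 5; 0; 1; 2; 3]);
(3, Posz 1, [:: 4; 5; 1; 0; 2; 3]);
(3, Posz 1, [:: 4; 5; 1; 2; 0; 3]);
(3, Posz 1, [:: 4; 5; 0; 1; 3; 2]);
(3, Posz 1, [:: 4; 5; 1; 0; 3; 2]);
(3, Posz 1, [:: 4; 5; 1; 2; 3; 0]);
(3, Posz 1, [:: 4; 5; 1; 3; 2; 0]);
(3, Posz 1, [:: 4; 5; 0; 3; 1; 2]);
(3, Posz 1, [:: 4; 5; 1; 3; 0; 2]);
(3, Posz 1, [:: 0; 3; 1; 4; 2; 5]);
(3, Posz 1, [:: 0; 3; 5; 1; 2; 4]);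
(3, Posz 1, [:: 0; 4; 1; 2; 3; 5]);
(3, Posz 1, [:: 0; 5; 1; 2; 4; 3]);
(3, Posz 1, [:: 0; 5; 1; 3; 4; 2]);
(3, Posz 1, [:: 0; 5; 1; 4; 2; 3]);
(3, Posz 1, [:: 0; 5; 1; 4; 3; 2]);
(3, Posz 1, [:: 0; 5; 3; 1; 4; 2]);
(3, Posz 1, [:: 0; 5; 3; 4; 1; 2]);
(3, Posz 1, [:: 1; 0; 2; 3; 4; 5]);
(3, Posz 1, [:: 1; 4; 0; 2; 3; 5]);
(3, Posz 1, [:: 4; 0; 1; 2; 3; 5]);
(3, Posz 1, [:: 4; 3; 1; 2; 0; 5]);
(3, Posz 1, [:: 4; 3; 1; 0; 2; 5]);
(3, Posz 1, [:: 4; 1; 3; 2; 0; 5]);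
(3, Posz 1, [:: 4; 1; 0; 2; 3; 5]);
(3, Posz 1, [:: 4; 1; 3; 0; 2; 5]);
(3, Posz 1, [:: 4; 1; 5; 0; 2; 3]);
(3, Posz 1, [:: 4; 5; 3; 1; 2; 0]);
(3, Posz 1, [:: 4; 5; 3; 1; 0; 2]);
(3, Posz 1, [:: 4; 5; 3; 0; 1; 2]);
(3, Negz 0, [:: 0; 1; 2; 3; 5; 4]);
(3, Negz 0, [:: 0; 1; 2; 5; 3; 4]);
(3, Negz 0, [:: 0; 1; 3; 5; 2; 4]);
(3, Negz 0, [:: 0; 1; 3; 2; 5; 4]);
(4, Posz 1, [:: 3; 1; 5; 2; 4; 0]);
(4, Posz 1, [:: 3; 1; 0; 2; 4; 5]);
(4, Posz 1, [:: 3; 0; 1; 4; 2; 5]);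
(4, Posz 1, [:: 3; 1; 5; 4; 2; 0]);
(4, Posz 1, [:: 3; 1; 0; 4; 2; 5]);
(4, Posz 1, [:: 3; 2; 1; 0; 5; 4]);
(4, Posz 1, [:: 3; 2; 1; 5; 0; 4]);
(4, Posz 1, [:: 3; 2; 0; 1; 5; 4]);
(4, Posz 1, [:: 4; 1; 0; 2; 3; 5]);
(4, Posz 1, [:: 4; 0; 1; 2; 3; 5]);
(4, Posz 1, [:: 4; 1; 5; 2; 3; 0]);
(4, Posz 1, [:: 4; 1; 0; 3; 2; 5]);
(4, Posz 1, [:: 4; 0; 1; 3; 2; 5]);
(4, Posz 1, [:: 4; 1; 5; 3; 2; 0]);
(4, Posz 1, [:: 0; 2; 1; 3; 5; 4]);
(4, Posz 1, [:: 0; 2; 1; 5; 3; 4]);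
(4, Posz 1, [:: 0; 2; 3; 1; 5; 4]);
(4, Posz 1, [:: 0; 3; 1; 4; 2; 5]);
(4, Posz 1, [:: 4; 3; 1; 2; 0; 5]);
(4, Posz 1, [:: 4; 3; 1; 0; 2; 5]);
(4, Posz 1, [:: 0; 1; 5; 2; 3; 4]);
(4, Posz 1, [:: 0; 1; 5; 3; 2; 4]);
(4, Negz 0, [:: 0; 1; 2; 3; 4; 5]);
(4, Negz 0, [:: 0; 1; 2; 4; 3; 5]);
(4, Negz 0, [:: 0; 2; 1; 3; 4; 5]);
(4, Negz 0, [:: 2; 0; 1; 3; 4; 5]);
(5, Posz 1, [:: 2; 3; 5; 0; 4; 1]);
(5, Posz 1, [:: 2; 3; 5; 1; 4; 0]);
(5, Posz 1, [:: 2; 4; 0; 1; 3; 5]);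
(5, Posz 1, [:: 2; 4; 1; 0; 3; 5]);
(5, Posz 1, [:: 2; 5; 0; 1; 3; 4]);
(5, Posz 1, [:: 2; 5; 1; 0; 3; 4]);
(5, Posz 1, [:: 2; 5; 0; 1; 4; 3]);
(5, Posz 1, [:: 2; 5; 1; 0; 4; 3]);
(5, Posz 1, [:: 2; 5; 1; 3; 0; 4]);
(5, Posz 1, [:: 2; 5; 0; 3; 1; 4]);
(5, Posz 1, [:: 2; 5; 1; 3; 4; 0]);
(5, Posz 1, [:: 2; 5; 0; 3; 4; 1]);
(5, Posz 1, [:: 2; 5; 1; 4; 0; 3]);
(5, Posz 1, [:: 2; 5; 0; 4; 1; 3]);
(5, Posz 1, [:: 2; 5; 1; 4; 3; 0]);
(5, Posz 1, [:: 2; 5; 0; 4; 3; 1]);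
(5, Posz 1, [:: 2; 5; 3; 0; 1; 4]);
(5, Posz 1, [:: 2; 5; 3; 1; 0; 4]);
(5, Posz 1, [:: 2; 5; 3; 0; 4; 1]);
(5, Posz 1, [:: 2; 5; 3; 1; 4; 0]);
(5, Posz 1, [:: 2; 5; 3; 4; 0; 1]);
(5, Posz 1, [:: 2; 5; 3; 4; 1; 0]);
(5, Posz 1, [:: 4; 2; 0; 1; 3; 5]);
(5, Posz 1, [:: 4; 2; 1; 0; 3; 5]);
(5, Posz 1, [:: 4; 5; 0; 1; 2; 3]);
(5, Posz 1, [:: 4; 5; 1; 0; 2; 3]);
(5, Posz 1, [:: 4; 5; 0; 2; 1; 3]);
(5, Posz 1, [:: 4; 5; 1; 2; 0; 3]);
(5, Posz 1, [:: 4; 5; 0; 2; 3; 1]);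
(5, Posz 1, [:: 4; 5; 1; 2; 3; 0]);
(5, Posz 1, [:: 4; 5; 2; 1; 3; 0]);
(5, Posz 1, [:: 4; 5; 2; 0; 3; 1]);
(5, Posz 1, [:: 4; 5; 2; 3; 0; 1]);
(5, Posz 1, [:: 4; 5; 2; 3; 1; 0]);
(5, Posz 1, [:: 2; 0; 5; 1; 4; 3]);
(5, Posz 1, [:: 0; 2; 5; 1; 4; 3]);
(5, Posz 1, [:: 0; 2; 5; 3; 4; 1]);
(5, Posz 1, [:: 2; 0; 5; 3; 4; 1]);
(5, Posz 1, [:: 2; 4; 1; 3; 0; 5]);
(5, Posz 1, [:: 0; 4; 1; 2; 3; 5]);
(5, Posz 1, [:: 2; 4; 5; 1; 3; 0]);
(5, Posz 1, [:: 2; 4; 5; 1; 0; 3]);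
(5, Posz 1, [:: 0; 4; 5; 1; 2; 3]);
(5, Posz 1, [:: 0; 5; 1; 2; 3; 4]);
(5, Posz 1, [:: 0; 5; 1; 2; 4; 3]);
(5, Posz 1, [:: 0; 5; 1; 4; 2; 3]);
(5, Posz 1, [:: 0; 5; 2; 1; 3; 4]);
(5, Posz 1, [:: 0; 5; 2; 1; 4; 3]);
(5, Posz 1, [:: 0; 5; 2; 3; 1; 4]);
(5, Posz 1, [:: 0; 5; 2; 3; 4; 1]);
(5, Posz 1, [:: 0; 5; 2; 4; 1; 3]);
(5, Posz 1, [:: 0; 5; 2; 4; 3; 1]);
(5, Posz 1, [:: 4; 0; 1; 2; 3; 5]);
(5, Posz 1, [:: 4; 2; 1; 3; 0; 5]);
(5, Posz 1, [:: 4; 0; 5; 1; 2; 3]);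
(5, Posz 1, [:: 4; 2; 5; 1; 0; 3]);
(5, Posz 1, [:: 4; 2; 5; 1; 3; 0]);
(5, Posz 1, [:: 4; 5; 2; 1; 0; 3]);
(5, Posz 1, [:: 4; 5; 2; 0; 1; 3]);
(5, Posz 1, [:: 0; 2; 1; 3; 4; 5]);
(5, Posz 1, [:: 2; 0; 1; 3; 4; 5]);
(6, Posz 1, [:: 2; 0; 1; 3; 4; 5]);
(6, Posz 1, [:: 2; 1; 0; 3; 4; 5]);
(6, Posz 1, [:: 2; 0; 1; 4; 3; 5]);
(6, Posz 1, [:: 2; 1; 0; 4; 3; 5]);
(6, Posz 1, [:: 2; 1; 4; 0; 3; 5]);
(6, Posz 1, [:: 2; 0; 4; 1; 3; 5]);
(6, Posz 1, [:: 2; 1; 4; 3; 0; 5]);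
(6, Posz 1, [:: 2; 0; 4; 3; 1; 5]);
(6, Posz 1, [:: 2; 0; 5; 1; 4; 3]);
(6, Posz 1, [:: 2; 1; 5; 0; 4; 3]);
(6, Posz 1, [:: 2; 1; 5; 4; 0; 3]);
(6, Posz 1, [:: 2; 3; 1; 4; 0; 5]);
(6, Posz 1, [:: 2; 3; 0; 4; 1; 5]);
(6, Posz 1, [:: 2; 3; 4; 0; 1; 5]);
(6, Posz 1, [:: 2; 3; 4; 1; 0; 5]);
(6, Posz 1, [:: 2; 3; 5; 0; 4; 1]);
(6, Posz 1, [:: 2; 3; 5; 1; 4; 0]);
(6, Posz 1, [:: 2; 5; 0; 1; 4; 3]);
(6, Posz 1, [:: 2; 5; 1; 0; 4; 3]);
(6, Posz 1, [:: 2; 5; 1; 4; 0; 3]);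
(6, Posz 1, [:: 2; 5; 0; 4; 1; 3]);
(6, Posz 1, [:: 2; 5; 4; 0; 1; 3]);
(6, Posz 1, [:: 2; 5; 4; 1; 0; 3]);
(6, Posz 1, [:: 3; 2; 0; 1; 4; 5]);
(6, Posz 1, [:: 3; 2; 1; 0; 4; 5]);
(6, Posz 1, [:: 3; 2; 5; 0; 4; 1]);
(6, Posz 1, [:: 3; 2; 5; 1; 4; 0]);
(6, Posz 1, [:: 3; 5; 2; 1; 4; 0]);
(6, Posz 1, [:: 3; 5; 2; 0; 4; 1]);
(6, Posz 1, [:: 3; 5; 2; 4; 0; 1]);
(6, Posz 1, [:: 3; 5; 2; 4; 1; 0]);
(6, Posz 1, [:: 0; 2; 1; 3; 4; 5]);
(6, Posz 1, [:: 0; 2; 5; 3; 4; 1]);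
(6, Posz 1, [:: 0; 5; 2; 1; 4; 3]);
(6, Posz 1, [:: 0; 5; 2; 3; 4; 1]);
(6, Posz 1, [:: 0; 5; 2; 4; 1; 3]);
(6, Posz 1, [:: 0; 5; 2; 4; 3; 1]);
(6, Posz 1, [:: 2; 0; 5; 3; 4; 1]);
(6, Posz 1, [:: 0; 1; 2; 3; 4; 5]);
(6, Posz 1, [:: 0; 1; 2; 4; 3; 5]);
(6, Posz 1, [:: 0; 1; 5; 2; 4; 3]);
(6, Posz 1, [:: 0; 5; 1; 2; 4; 3]);
(7, Posz 1, [:: 0; 1; 3; 2; 4; 5]);
(7, Posz 1, [:: 1; 0; 3; 2; 4; 5]);
(7, Posz 1, [:: 2; 4; 3; 1; 0; 5]);
(7, Posz 1, [:: 2; 4; 3; 0; 1; 5]);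
(7, Posz 1, [:: 4; 0; 3; 1; 2; 5]);
(7, Posz 1, [:: 4; 1; 3; 0; 2; 5]);
(7, Posz 1, [:: 4; 1; 3; 2; 0; 5]);
(7, Posz 1, [:: 4; 0; 3; 2; 1; 5]);
(7, Posz 1, [:: 4; 2; 3; 0; 1; 5]);
(7, Posz 1, [:: 4; 2; 3; 1; 0; 5]);
(7, Posz 1, [:: 0; 1; 3; 4; 2; 5]);
(7, Posz 1, [:: 0; 2; 3; 1; 4; 5]);
(7, Posz 1, [:: 0; 2; 3; 4; 1; 5]);
(7, Posz 1, [:: 0; 4; 3; 1; 2; 5]);
(7, Posz 1, [:: 2; 0; 3; 1; 4; 5]);
(7, Posz 1, [:: 2; 0; 3; 4; 1; 5]);
(8, Posz 1, [:: 1; 0; 4; 2; 3; 5]);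
(8, Posz 1, [:: 0; 1; 4; 2; 3; 5]);
(8, Posz 1, [:: 3; 2; 0; 1; 4; 5]);
(8, Posz 1, [:: 3; 2; 1; 0; 4; 5]);
(8, Posz 1, [:: 3; 2; 1; 4; 0; 5]);
(8, Posz 1, [:: 3; 2; 0; 4; 1; 5]);
(8, Posz 1, [:: 0; 2; 1; 3; 4; 5]);
(8, Posz 1, [:: 0; 2; 1; 4; 3; 5]);
(8, Posz 1, [:: 0; 2; 3; 1; 4; 5]);
(8, Posz 1, [:: 0; 2; 3; 4; 1; 5]);
(8, Posz 1, [:: 3; 0; 4; 1; 2; 5]);
(8, Posz 1, [:: 0; 3; 4; 1; 2; 5]);
(8, Posz 1, [:: 0; 1; 2; 3; 4; 5]);
(8, Posz 1, [:: 0; 1; 2; 4; 3; 5]);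
(8, Posz 1, [:: 0; 1; 3; 2; 4; 5]);
(8, Posz 1, [:: 0; 1; 3; 4; 2; 5]);
(8, Posz 1, [:: 0; 2; 4; 1; 3; 5]);
(8, Posz 1, [:: 2; 0; 4; 1; 3; 5])].
Definition ZLd : seq (nat * nat * seq nat) := [::
(0, 1, [:: 0; 1; 2; 3; 4; 5]);
(0, 1, [:: 0; 1; 3; 2; 4; 5]);
(0, 1, [:: 0; 4; 1; 2; 3; 5]);
(0, 1, [:: 0; 4; 1; 3; 2; 5]);
(0, 1, [:: 0; 4; 5; 1; 2; 3]);
(0, 1, [:: 0; 4; 5; 1; 3; 2]);
(0, 1, [:: 2; 4; 5; 0; 1; 3]);
(0, 1, [:: 2; 5; 0; 1; 3; 4]);
(0, 1, [:: 2; 5; 0; 1; 4; 3]);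
(0, 1, [:: 2; 5; 0; 4; 1; 3]);
(0, 1, [:: 4; 0; 1; 2; 3; 5]);
(0, 1, [:: 4; 0; 1; 3; 2; 5]);
(0, 1, [:: 4; 0; 2; 1; 3; 5]);
(0, 1, [:: 4; 0; 5; 1; 3; 2]);
(0, 1, [:: 4; 0; 5; 2; 1; 3]);
(0, 1, [:: 4; 2; 0; 1; 3; 5]);
(0, 1, [:: 4; 2; 5; 0; 1; 3]);
(0, 1, [:: 4; 5; 0; 1; 2; 3]);
(0, 1, [:: 4; 5; 0; 2; 1; 3]);
(0, 2, [:: 0; 1; 2; 3; 4; 5]);
(0, 2, [:: 0; 1; 4; 2; 3; 5]);
(0, 2, [:: 0; 1; 5; 2; 3; 4]);
(0, 2, [:: 0; 1; 5; 2; 4; 3]);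
(0, 2, [:: 2; 0; 1; 3; 4; 5]);
(0, 2, [:: 2; 0; 1; 4; 3; 5]);
(0, 2, [:: 2; 0; 5; 1; 4; 3]);
(0, 2, [:: 2; 3; 0; 1; 4; 5]);
(0, 2, [:: 2; 5; 0; 1; 4; 3]);
(0, 2, [:: 3; 0; 2; 1; 4; 5]);
(0, 2, [:: 3; 0; 5; 1; 2; 4]);
(0, 2, [:: 3; 0; 5; 2; 1; 4]);
(0, 2, [:: 3; 5; 0; 1; 2; 4]);
(0, 2, [:: 3; 5; 0; 2; 1; 4]);
(0, 2, [:: 3; 5; 2; 0; 1; 4]);
(0, 3, [:: 0; 3; 1; 2; 4; 5]);
(0, 3, [:: 0; 4; 1; 3; 2; 5]);
(0, 3, [:: 0; 4; 3; 1; 2; 5]);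
(0, 3, [:: 0; 4; 5; 1; 2; 3]);
(0, 3, [:: 0; 4; 5; 1; 3; 2]);
(0, 3, [:: 0; 4; 5; 3; 1; 2]);
(0, 3, [:: 3; 0; 1; 4; 2; 5]);
(0, 3, [:: 3; 0; 5; 1; 2; 4]);
(0, 3, [:: 3; 4; 0; 1; 2; 5]);
(0, 3, [:: 3; 4; 5; 0; 1; 2]);
(0, 3, [:: 3; 5; 0; 1; 4; 2]);
(0, 3, [:: 3; 5; 0; 4; 1; 2]);
(0, 3, [:: 4; 0; 1; 3; 2; 5]);
(0, 3, [:: 4; 0; 5; 1; 3; 2]);
(0, 3, [:: 4; 0; 5; 3; 1; 2]);
(0, 3, [:: 4; 3; 5; 0; 1; 2]);
(0, 3, [:: 4; 5; 0; 1; 2; 3]);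
(0, 3, [:: 4; 5; 0; 1; 3; 2]);
(0, 3, [:: 4; 5; 0; 3; 1; 2]);
(0, 4, [:: 3; 0; 1; 2; 4; 5]);
(0, 4, [:: 3; 0; 1; 4; 2; 5]);
(0, 4, [:: 3; 2; 0; 1; 5; 4]);
(0, 4, [:: 4; 0; 1; 2; 3; 5]);
(0, 4, [:: 4; 0; 1; 3; 2; 5]);
(0, 5, [:: 2; 3; 5; 0; 4; 1]);
(0, 5, [:: 2; 4; 0; 1; 3; 5]);
(0, 5, [:: 2; 5; 0; 1; 3; 4]);
(0, 5, [:: 2; 5; 0; 1; 4; 3]);
(0, 5, [:: 2; 5; 0; 3; 1; 4]);
(0, 5, [:: 2; 5; 0; 3; 4; 1]);
(0, 5, [:: 2; 5; 0; 4; 1; 3]);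
(0, 5, [:: 2; 5; 0; 4; 3; 1]);
(0, 5, [:: 2; 5; 3; 0; 1; 4]);
(0, 5, [:: 2; 5; 3; 0; 4; 1]);
(0, 5, [:: 2; 5; 3; 4; 0; 1]);
(0, 5, [:: 4; 2; 0; 1; 3; 5]);
(0, 5, [:: 4; 5; 0; 1; 2; 3]);
(0, 5, [:: 4; 5; 0; 2; 1; 3]);
(0, 5, [:: 4; 5; 0; 2; 3; 1]);
(0, 5, [:: 4; 5; 2; 0; 3; 1]);
(0, 5, [:: 4; 5; 2; 3; 0; 1]);
(0, 6, [:: 2; 0; 1; 3; 4; 5]);
(0, 6, [:: 2; 0; 1; 4; 3; 5]);
(0, 6, [:: 2; 0; 4; 1; 3; 5]);
(0, 6, [:: 2; 0; 4; 3; 1; 5]);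
(0, 6, [:: 2; 0; 5; 1; 4; 3]);
(0, 6, [:: 2; 0; 5; 4; 1; 3]);
(0, 6, [:: 2; 3; 0; 4; 1; 5]);
(0, 6, [:: 2; 3; 4; 0; 1; 5]);
(0, 6, [:: 2; 3; 5; 0; 4; 1]);
(0, 6, [:: 2; 5; 0; 1; 4; 3]);
(0, 6, [:: 2; 5; 0; 4; 1; 3]);
(0, 6, [:: 2; 5; 4; 0; 1; 3]);
(0, 6, [:: 3; 2; 0; 1; 4; 5]);
(0, 6, [:: 3; 2; 5; 0; 4; 1]);
(0, 6, [:: 3; 5; 2; 0; 4; 1]);
(0, 6, [:: 3; 5; 2; 4; 0; 1]);
(0, 7, [:: 0; 1; 3; 2; 4; 5]);
(0, 7, [:: 2; 4; 3; 0; 1; 5]);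
(0, 7, [:: 4; 0; 3; 1; 2; 5]);
(0, 7, [:: 4; 0; 3; 2; 1; 5]);
(0, 7, [:: 4; 2; 3; 0; 1; 5]);
(0, 8, [:: 0; 1; 4; 2; 3; 5]);
(0, 8, [:: 3; 2; 0; 1; 4; 5]);
(0, 8, [:: 3; 2; 0; 4; 1; 5]);
(1, 2, [:: 0; 1; 2; 3; 4; 5]);
(1, 2, [:: 0; 1; 5; 2; 3; 4]);
(1, 2, [:: 0; 1; 5; 3; 2; 4]);
(1, 2, [:: 0; 3; 1; 2; 4; 5]);
(1, 2, [:: 0; 3; 2; 1; 4; 5]);
(1, 2, [:: 0; 3; 2; 4; 1; 5]);
(1, 2, [:: 0; 3; 4; 1; 2; 5]);
(1, 2, [:: 0; 3; 5; 1; 4; 2]);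
(1, 2, [:: 0; 3; 5; 2; 1; 4]);
(1, 2, [:: 0; 3; 5; 2; 4; 1]);
(1, 2, [:: 0; 3; 5; 4; 2; 1]);
(1, 2, [:: 0; 5; 1; 2; 3; 4]);
(1, 2, [:: 0; 5; 1; 3; 2; 4]);
(1, 2, [:: 0; 5; 2; 1; 3; 4]);
(1, 2, [:: 0; 5; 2; 3; 1; 4]);
(1, 2, [:: 0; 5; 2; 3; 4; 1]);
(1, 2, [:: 0; 5; 3; 1; 2; 4]);
(1, 2, [:: 0; 5; 3; 2; 1; 4]);
(1, 2, [:: 0; 5; 3; 2; 4; 1]);
(1, 2, [:: 0; 5; 3; 4; 2; 1]);
(1, 2, [:: 2; 0; 1; 3; 4; 5]);
(1, 2, [:: 2; 0; 3; 1; 4; 5]);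
(1, 2, [:: 2; 0; 3; 4; 1; 5]);
(1, 3, [:: 0; 1; 2; 4; 3; 5]);
(1, 3, [:: 0; 1; 3; 4; 2; 5]);
(1, 3, [:: 0; 1; 5; 2; 3; 4]);
(1, 3, [:: 0; 1; 5; 3; 2; 4]);
(1, 3, [:: 0; 3; 1; 4; 2; 5]);
(1, 3, [:: 0; 3; 5; 1; 2; 4]);
(1, 3, [:: 0; 4; 1; 2; 3; 5]);
(1, 3, [:: 0; 4; 1; 3; 2; 5]);
(1, 3, [:: 0; 4; 3; 1; 2; 5]);
(1, 3, [:: 0; 4; 5; 1; 2; 3]);
(1, 3, [:: 0; 4; 5; 1; 3; 2]);
(1, 3, [:: 0; 4; 5; 3; 1; 2]);
(1, 3, [:: 0; 5; 1; 2; 4; 3]);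
(1, 3, [:: 0; 5; 1; 3; 4; 2]);
(1, 3, [:: 0; 5; 1; 4; 2; 3]);
(1, 3, [:: 0; 5; 1; 4; 3; 2]);
(1, 3, [:: 0; 5; 3; 1; 4; 2]);
(1, 3, [:: 0; 5; 3; 4; 1; 2]);
(1, 3, [:: 1; 0; 2; 3; 4; 5]);
(1, 3, [:: 1; 0; 3; 2; 4; 5]);
(1, 3, [:: 1; 4; 0; 2; 3; 5]);
(1, 3, [:: 1; 4; 0; 3; 2; 5]);
(1, 3, [:: 1; 4; 5; 0; 2; 3]);
(1, 3, [:: 1; 4; 5; 0; 3; 2]);
(1, 3, [:: 4; 0; 1; 2; 3; 5]);
(1, 3, [:: 4; 0; 1; 3; 2; 5]);
(1, 3, [:: 4; 0; 5; 1; 3; 2]);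
(1, 3, [:: 4; 0; 5; 3; 1; 2]);
(1, 3, [:: 4; 1; 0; 2; 3; 5]);
(1, 3, [:: 4; 1; 0; 3; 2; 5]);
(1, 3, [:: 4; 1; 5; 0; 2; 3]);
(1, 3, [:: 4; 1; 5; 0; 3; 2]);
(1, 3, [:: 4; 5; 0; 1; 2; 3]);
(1, 3, [:: 4; 5; 0; 1; 3; 2]);
(1, 3, [:: 4; 5; 0; 3; 1; 2]);
(1, 4, [:: 0; 1; 3; 2; 4; 5]);
(1, 4, [:: 0; 1; 3; 4; 2; 5]);
(1, 4, [:: 0; 1; 5; 2; 4; 3]);
(1, 4, [:: 0; 1; 5; 4; 2; 3]);
(1, 4, [:: 0; 2; 1; 3; 5; 4]);
(1, 4, [:: 0; 2; 1; 5; 3; 4]);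
(1, 4, [:: 0; 2; 3; 1; 5; 4]);
(1, 4, [:: 0; 3; 1; 4; 2; 5]);
(1, 4, [:: 4; 0; 1; 2; 3; 5]);
(1, 4, [:: 4; 0; 1; 3; 2; 5]);
(1, 5, [:: 0; 2; 5; 1; 4; 3]);
(1, 5, [:: 0; 2; 5; 3; 4; 1]);
(1, 5, [:: 0; 4; 1; 2; 3; 5]);
(1, 5, [:: 0; 4; 5; 1; 2; 3]);
(1, 5, [:: 0; 5; 1; 2; 3; 4]);
(1, 5, [:: 0; 5; 1; 2; 4; 3]);
(1, 5, [:: 0; 5; 1; 4; 2; 3]);
(1, 5, [:: 0; 5; 2; 1; 3; 4]);
(1, 5, [:: 0; 5; 2; 1; 4; 3]);
(1, 5, [:: 0; 5; 2; 3; 1; 4]);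
(1, 5, [:: 0; 5; 2; 3; 4; 1]);
(1, 5, [:: 0; 5; 2; 4; 1; 3]);
(1, 5, [:: 0; 5; 2; 4; 3; 1]);
(1, 5, [:: 4; 0; 1; 2; 3; 5]);
(1, 5, [:: 4; 0; 5; 1; 2; 3]);
(1, 5, [:: 4; 5; 0; 1; 2; 3]);
(1, 5, [:: 4; 5; 0; 2; 1; 3]);
(1, 5, [:: 4; 5; 0; 2; 3; 1]);
(1, 6, [:: 0; 2; 1; 3; 4; 5]);
(1, 6, [:: 0; 2; 3; 1; 4; 5]);
(1, 6, [:: 0; 2; 5; 1; 4; 3]);
(1, 6, [:: 0; 2; 5; 3; 4; 1]);
(1, 6, [:: 0; 5; 2; 1; 4; 3]);
(1, 6, [:: 0; 5; 2; 3; 4; 1]);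
(1, 6, [:: 0; 5; 2; 4; 1; 3]);
(1, 6, [:: 0; 5; 2; 4; 3; 1]);
(1, 6, [:: 2; 0; 1; 4; 3; 5]);
(1, 6, [:: 2; 0; 3; 4; 1; 5]);
(1, 6, [:: 2; 0; 4; 1; 3; 5]);
(1, 6, [:: 2; 0; 4; 3; 1; 5]);
(1, 6, [:: 2; 0; 5; 1; 4; 3]);
(1, 6, [:: 2; 0; 5; 3; 4; 1]);
(1, 8, [:: 0; 2; 1; 3; 4; 5]);
(1, 8, [:: 0; 2; 1; 4; 3; 5]);
(1, 8, [:: 0; 2; 3; 1; 4; 5]);
(1, 8, [:: 0; 2; 3; 4; 1; 5]);
(1, 8, [:: 0; 3; 4; 1; 2; 5]);
(2, 3, [:: 0; 1; 2; 3; 4; 5]);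
(2, 3, [:: 0; 1; 3; 2; 4; 5]);
(2, 3, [:: 0; 1; 3; 4; 2; 5]);
(2, 3, [:: 0; 1; 4; 2; 3; 5]);
(2, 3, [:: 0; 1; 5; 2; 3; 4]);
(2, 3, [:: 0; 1; 5; 4; 2; 3]);
(2, 3, [:: 0; 3; 1; 2; 4; 5]);
(2, 3, [:: 0; 3; 1; 4; 2; 5]);
(2, 3, [:: 0; 3; 5; 1; 2; 4]);
(2, 3, [:: 0; 4; 1; 2; 3; 5]);
(2, 3, [:: 0; 5; 1; 2; 3; 4]);
(2, 3, [:: 0; 5; 1; 2; 4; 3]);
(2, 3, [:: 0; 5; 1; 3; 2; 4]);
(2, 3, [:: 0; 5; 1; 3; 4; 2]);
(2, 3, [:: 0; 5; 1; 4; 2; 3]);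
(2, 3, [:: 0; 5; 1; 4; 3; 2]);
(2, 3, [:: 0; 5; 3; 1; 2; 4]);
(2, 3, [:: 0; 5; 3; 1; 4; 2]);
(2, 3, [:: 0; 5; 3; 4; 1; 2]);
(2, 3, [:: 1; 0; 2; 3; 4; 5]);
(2, 3, [:: 1; 0; 4; 2; 3; 5]);
(2, 3, [:: 1; 0; 5; 2; 3; 4]);
(2, 3, [:: 1; 0; 5; 2; 4; 3]);
(2, 4, [:: 0; 1; 4; 2; 3; 5]);
(2, 4, [:: 0; 1; 4; 3; 2; 5]);
(2, 4, [:: 0; 1; 5; 2; 3; 4]);
(2, 4, [:: 0; 1; 5; 3; 2; 4]);
(2, 4, [:: 0; 3; 1; 2; 4; 5]);
(2, 4, [:: 0; 3; 1; 4; 2; 5]);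
(2, 4, [:: 0; 4; 1; 3; 2; 5]);
(2, 5, [:: 0; 2; 1; 3; 4; 5]);
(2, 5, [:: 0; 2; 4; 1; 3; 5]);
(2, 5, [:: 0; 2; 5; 1; 3; 4]);
(2, 5, [:: 0; 2; 5; 1; 4; 3]);
(2, 5, [:: 0; 4; 1; 2; 3; 5]);
(2, 5, [:: 0; 4; 5; 1; 2; 3]);
(2, 5, [:: 0; 5; 1; 2; 3; 4]);
(2, 5, [:: 0; 5; 1; 2; 4; 3]);
(2, 5, [:: 0; 5; 1; 4; 2; 3]);
(2, 5, [:: 0; 5; 2; 1; 4; 3]);
(2, 5, [:: 0; 5; 2; 4; 1; 3]);
(2, 5, [:: 2; 0; 1; 3; 4; 5]);
(2, 5, [:: 2; 0; 4; 1; 3; 5]);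
(2, 5, [:: 2; 0; 5; 1; 3; 4]);
(2, 5, [:: 2; 0; 5; 1; 4; 3]);
(2, 6, [:: 0; 1; 2; 3; 4; 5]);
(2, 6, [:: 0; 1; 2; 4; 3; 5]);
(2, 6, [:: 0; 1; 5; 2; 4; 3]);
(2, 6, [:: 0; 5; 1; 2; 4; 3]);
(2, 6, [:: 0; 5; 2; 1; 4; 3]);
(2, 6, [:: 0; 5; 2; 4; 1; 3]);
(2, 7, [:: 0; 1; 3; 2; 4; 5]);
(2, 7, [:: 0; 1; 3; 4; 2; 5]);
(2, 7, [:: 0; 2; 3; 1; 4; 5]);
(2, 7, [:: 0; 2; 3; 4; 1; 5]);
(2, 7, [:: 0; 4; 3; 1; 2; 5]);
(2, 7, [:: 2; 0; 3; 1; 4; 5]);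
(2, 7, [:: 2; 0; 3; 4; 1; 5]);
(3, 4, [:: 0; 1; 2; 3; 5; 4]);
(3, 4, [:: 0; 1; 2; 5; 3; 4]);
(3, 4, [:: 0; 1; 3; 2; 5; 4]);
(3, 7, [:: 0; 1; 3; 4; 2; 5]);
(3, 7, [:: 1; 0; 3; 2; 4; 5]);
(3, 8, [:: 0; 1; 2; 3; 4; 5]);
(3, 8, [:: 0; 1; 2; 4; 3; 5]);
(3, 8, [:: 0; 1; 3; 2; 4; 5]);
(3, 8, [:: 0; 1; 3; 4; 2; 5]);
(3, 8, [:: 0; 1; 4; 2; 3; 5]);
(3, 8, [:: 1; 0; 4; 2; 3; 5]);
(4, 5, [:: 0; 1; 2; 3; 4; 5]);
(4, 5, [:: 0; 1; 2; 3; 5; 4]);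
(4, 5, [:: 0; 1; 2; 4; 3; 5]);
(4, 5, [:: 0; 1; 2; 5; 3; 4]);
(4, 5, [:: 0; 2; 1; 3; 4; 5]);
(4, 5, [:: 2; 0; 1; 3; 4; 5]);
(4, 6, [:: 0; 1; 2; 3; 4; 5]);
(4, 6, [:: 0; 1; 2; 4; 3; 5]);
(4, 6, [:: 0; 1; 5; 2; 4; 3]);
(4, 6, [:: 0; 2; 1; 3; 4; 5]);
(4, 6, [:: 2; 0; 1; 3; 4; 5]);
(5, 8, [:: 0; 1; 2; 3; 4; 5]);
(5, 8, [:: 0; 1; 2; 4; 3; 5]);
(5, 8, [:: 0; 2; 4; 1; 3; 5]);
(5, 8, [:: 2; 0; 4; 1; 3; 5]);
(6, 7, [:: 0; 2; 3; 1; 4; 5]);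
(6, 7, [:: 2; 0; 3; 4; 1; 5])].
Definition uT : seq (seq nat) := [::
[:: 0; 0; 0; 0; 0; 0; 0; 0; 0; 0; 0; 0; 0; 0; 0; 0; 0; 0; 0; 0; 0; 0; 0; 0; 0; 0; 0; 0; 0; 0; 0; 0; 0; 0; 0; 0];
[:: 0; 1; 0; 0; 0; 0; 1; 0; 0; 0; 0; 0; 0; 0; 0; 0; 0; 0; 0; 0; 0; 0; 0; 0; 0; 0; 0; 0; 0; 0; 0; 0; 0; 0; 0; 0];
[:: 0; 0; 1; 0; 0; 0; 0; 0; 0; 0; 0; 0; 1; 0; 0; 0; 0; 0; 0; 0; 0; 0; 0; 0; 0; 0; 0; 0; 0; 0; 0; 0; 0; 0; 0; 0];
[:: 0; 1; 0; 0; 0; 0; 1; 0; 0; 0; 0; 0; 0; 0; 0; 0; 0; 0; 0; 0; 0; 0; 0; 0; 0; 0; 0; 0; 0; 0; 0; 0; 0; 0; 0; 0];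
[:: 0; 0; 0; 0; 0; 0; 0; 0; 0; 1; 0; 0; 0; 0; 0; 0; 0; 0; 0; 1; 0; 0; 0; 0; 0; 0; 0; 0; 0; 0; 0; 0; 0; 0; 0; 0];
[:: 0; 0; 1; 0; 0; 0; 0; 0; 1; 0; 0; 0; 1; 1; 0; 0; 0; 0; 0; 0; 0; 0; 0; 0; 0; 0; 0; 0; 0; 0; 0; 0; 0; 0; 0; 0];
[:: 0; 0; 0; 0; 0; 0; 0; 0; 0; 0; 0; 0; 0; 0; 0; 0; 0; 0; 0; 0; 0; 0; 0; 0; 0; 0; 0; 0; 0; 0; 0; 0; 0; 0; 0; 0];
[:: 0; 0; 0; 0; 0; 0; 0; 0; 0; 0; 0; 0; 0; 0; 0; 0; 0; 0; 0; 0; 0; 0; 0; 0; 0; 0; 0; 0; 0; 0; 0; 0; 0; 0; 0; 0];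
[:: 0; 0; 0; 0; 0; 0; 0; 0; 0; 0; 0; 0; 0; 0; 0; 0; 0; 0; 0; 0; 0; 0; 0; 0; 0; 0; 0; 0; 0; 0; 0; 0; 0; 0; 0; 0]].
Definition K33n : seq (nat * nat) :=
  [:: (0,1); (0,3); (0,4); (1,2); (1,5); (2,3); (2,4); (3,5); (4,5)]%N.
Definition edgeN (p : nat * nat) (a b : nat) : bool := (p == (a, b)) || (p == (b, a)).
Definition rN (Fn : seq nat) (a b : nat) : bool :=
  has (fun i => edgeN (nth (0,0)%N K33n i) a b) Fn.
Definition stepN (Fn : seq nat) (S : seq nat) : seq nat :=
  S ++ [seq j <- iota 0 6 | has (fun i => rN Fn i j) S].
Definition reachN (Fn : seq nat) (a b : nat) : bool := b \in iter 6 (stepN Fn) [:: a].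
Definition comps (Fn : seq nat) : seq (seq nat) := [seq iter 6 (stepN Fn) [:: i] | i <- iota 0 6].
Definition closedN (Fn : seq nat) : bool := let C := comps Fn in
  all (fun a => all (fun b => all (fun c =>
     (b \in nth [::] C a) ==> rN Fn b c ==> (c \in nth [::] C a)) (iota 0 6)) (iota 0 6)) (iota 0 6).
Definition QC (C : seq (seq nat)) (g : seq nat) : bool :=
  all (fun i => nth 0%N g i \in nth [::] C i) (iota 0 6).
Definition QN (Fn : seq nat) (g : seq nat) : bool := QC (comps Fn) g.
Definition PLnat : seq (seq nat) := permutations (iota 0 6).
Definition GLn (Fn : seq nat) : seq (int * seq nat) := let C := comps Fn in [seq (1%:Z, g) | g <- PLnat & QC C g].
Definition cfL (L : seq (int * seq nat)) (g : seq nat) : int :=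
  foldr (fun p acc => (if p.2 == g then p.1 else 0) + acc) 0 L.
Definition compose (g h : seq nat) : seq nat := [seq nth 0%N h i | i <- g].
Definition mulL (A B : seq (int * seq nat)) : seq (int * seq nat) :=
  flatten [seq [seq (a.1 * b.1, compose a.2 b.2) | b <- B] | a <- A].
Definition scaleL (c : int) (A : seq (int * seq nat)) : seq (int * seq nat) :=
  [seq (c * a.1, a.2) | a <- A].
Definition linchk (A B : seq (int * seq nat)) : bool :=
  all (fun g => cfL A g == cfL B g) (map snd (A ++ B)).
Definition validL (A : seq (int * seq nat)) : bool :=
  all (fun p => perm_eq p.2 (iota 0 6)) A.
Definition uN (e a b : nat) : nat := nth 0%N (nth [::] uT e) (a * 6 + b).
Definition WL (i : nat) : seq (int * seq nat) := [seq (p.1.2, p.2) | p <- WLd & p.1.1 == i].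
Definition XL (i : nat) := mulL (WL i) (GLn [:: i]).
Definition ZL (i j : nat) : seq (int * seq nat) := [seq (1%:Z, p.2) | p <- ZLd & p.1 == (i, j)].
Definition YL (i j : nat) := mulL (ZL i j) (GLn [:: i; j]).
Definition BL (i : nat) : seq (int * seq nat) :=
  flatten [seq scaleL (if (i < j)%N then -1 else 1) (YL (minn i j) (maxn i j)) | j <- iota 0 9 & j != i].
Definition parchk : bool :=
  all (fun e => all (fun f => let GL := GLn [:: e; f] in all (fun a => all (fun b =>
    ~~ odd (sumn [seq uN e (nth 0%N p.2 a) (nth 0%N p.2 b) + uN f (nth 0%N p.2 a) (nth 0%N p.2 b) | p <- GL]))
   (iota 0 6)) (iota 0 6)) (iota 0 9)) (iota 0 9).
Definition psiN : int :=
  foldr (fun e acc => let X := XL e in foldr (fun p acc2 => p.1 * (uN e (nth 0%N p.2 0) (nth 0%N p.2 2))%:Z + acc2) 0 X + acc) 0 (iota 0 9).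
Definition cyclechk : bool := linchk (flatten [seq XL i | i <- iota 0 9]) [::].
Definition bdchk : bool := all (fun i => linchk (BL i) (XL i ++ XL i)) (iota 0 9).
Lemma closed_chk1 : all (fun i => closedN [:: i]) (iota 0 9).
Proof. by vm_compute. Qed.
Lemma closed_chk2 : all (fun i => all (fun j => closedN [:: i; j]) (iota 0 9)) (iota 0 9).
Proof. by vm_compute. Qed.
Lemma par_chk : parchk. Proof. by vm_compute. Qed.
Definition Gpsi (e : nat) : int :=
  \sum_(p <- XL e) p.1 * (uN e (nth 0%N p.2 0) (nth 0%N p.2 2))%:Z.
Lemma Gpsi_sum : \sum_(i <- iota 0 9) Gpsi i = 23%:Z.
Proof. rewrite /Gpsi !unlock. by vm_compute. Qed.
Lemma cycle_chk : linchk (flatten [seq XL i | i <- iota 0 9]) [::]. Proof. by vm_compute. Qed.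
Lemma bd_chk : all (fun i => linchk (BL i) (XL i ++ XL i)) (iota 0 9). Proof. by vm_compute. Qed.
Lemma valid_chk : all (fun i => validL (WL i)) (iota 0 9) && validL [seq (1%:Z, p.2) | p <- ZLd].
Proof. by vm_compute. Qed.

Definition gr (s : {perm 'I_6}) : seq nat := mkseq (fun i => nat_of_ord (s (inord i))) 6.

Lemma size_gr s : size (gr s) = 6%N. Proof. by rewrite size_mkseq. Qed.

Lemma nth_gr s (x : 'I_6) : nth 0%N (gr s) x = nat_of_ord (s x).
Proof. by rewrite nth_mkseq // inord_val. Qed.

Lemma gr_inj : injective gr.
Proof.
move=> s t H; apply/permP => x; apply: ord_inj.
by rewrite -!nth_gr H.
Qed.

Lemma valid_gr s : perm_eq (gr s) (iota 0 6).
Proof.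
apply: uniq_perm; last first.
- move=> i; rewrite mem_iota add0n /=; apply/idP/idP.
  + move=> /(nthP 0%N) [k]; rewrite size_gr => Hk <-; rewrite nth_mkseq //.
  + move=> Hi; apply/(nthP 0%N); exists (nat_of_ord ((s^-1)%g (inord i))); first by rewrite size_gr ltn_ord.
    by rewrite nth_gr permKV; apply: inordK.
- by apply: iota_uniq.
- rewrite /gr /mkseq map_inj_in_uniq ?iota_uniq // => i j; rewrite !mem_iota /= => Hi Hj /val_inj/perm_inj.
  by move/(congr1 (@nat_of_ord _)); rewrite !inordK.
Qed.

Lemma gr_PL s : gr s \in PLnat.
Proof. by rewrite /PLnat mem_permutations valid_gr. Qed.

Definition pfun (g : seq nat) : {ffun 'I_6 -> 'I_6} := [ffun x : 'I_6 => inord (nth 0%N g x)].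
Definition pg (g : seq nat) : {perm 'I_6} := insubd (1%g : {perm 'I_6}) (pfun g).

Section Valid.
Variable g : seq nat.
Hypothesis vg : perm_eq g (iota 0 6).

Lemma valid_size : size g = 6%N.
Proof. by rewrite (perm_size vg) size_iota. Qed.

Lemma valid_lt i : (i < 6)%N -> (nth 0%N g i < 6)%N.
Proof.
move=> Hi; have : nth 0%N g i \in g by rewrite mem_nth // valid_size.
by rewrite (perm_mem vg) mem_iota.
Qed.

Lemma valid_uniq : uniq g.
Proof. by rewrite (perm_uniq vg) iota_uniq. Qed.

Lemma pgE x : pg g x = inord (nth 0%N g x).
Proof.
have Hinj : injectiveb (pfun g).
  apply/injectiveP => a b; rewrite !ffunE  => /(congr1 (@nat_of_ord _)); rewrite !inordK ?valid_lt //.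
  by move/eqP; rewrite nth_uniq ?valid_size ?valid_uniq // => /eqP/val_inj.
have H := insubdK (1%g : {perm 'I_6}) Hinj.
have H' : pval (pg g) = pfun g := H.
by rewrite -pvalE H' ffunE.
Qed.

Lemma gr_pg : gr (pg g) = g.
Proof.
apply: (@eq_from_nth _ 0%N); first by rewrite size_gr valid_size.
move=> i; rewrite size_gr => Hi.
by rewrite nth_mkseq // pgE inordK inordK // valid_lt.
Qed.
End Valid.

Lemma pg_gr s : pg (gr s) = s.
Proof. by apply: gr_inj; rewrite gr_pg // valid_gr. Qed.

Lemma gr_mul s t : gr (s * t)%g = compose (gr s) (gr t).
Proof.
apply: (@eq_from_nth _ 0%N); first by rewrite /compose size_map !size_gr.
move=> i; rewrite size_gr => Hi.
rewrite [RHS](nth_map 0%N) ?size_gr //.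
by rewrite -(@inordK 5 i Hi) !nth_gr permM.
Qed.

Lemma sum_ind (R : nmodType) g (vg : perm_eq g (iota 0 6)) (F : {perm 'I_6} -> R) :
  \sum_(s : {perm 'I_6}) (if g == gr s then F s else 0) = F (pg g).
Proof.
rewrite (bigD1 (pg g)) //= gr_pg // eqxx big1 ?addr0 // => s Hs.
case: eqP => // Hg; move: Hs; by rewrite Hg pg_gr eqxx.
Qed.

Definition lin (L : seq (int * seq nat)) : ZS 6 := [ffun s => cfL L (gr s)].

Lemma cfL_cat A B g : cfL (A ++ B) g = cfL A g + cfL B g.
Proof. elim: A => [|a A IH] /=; first by rewrite add0r. by rewrite IH addrA. Qed.

Lemma lin_cat A B : lin (A ++ B) = lin A + lin B.
Proof. by apply/ffunP => s; rewrite !ffunE cfL_cat. Qed.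

Lemma lin_nil : lin [::] = 0.
Proof. by apply/ffunP => s; rewrite !ffunE. Qed.

Lemma cfL_notin L g : g \notin map snd L -> cfL L g = 0.
Proof.
elim: L => [|a L IH] //=; rewrite in_cons negb_or => /andP [Ha Hn].
by rewrite IH // addr0 eq_sym (negbTE Ha).
Qed.

Lemma lin_eq A B : linchk A B -> lin A = lin B.
Proof.
move=> /allP H; apply/ffunP => s; rewrite !ffunE.
case: (boolP (gr s \in map snd (A ++ B))) => Hin; first by apply/eqP; apply: H.
move: Hin; rewrite map_cat mem_cat negb_or => /andP [H1 H2].
by rewrite !cfL_notin.
Qed.

Lemma cfL_scale c A g : cfL (scaleL c A) g = c * cfL A g.
Proof.
elim: A => [|a A IH] /=; first by rewrite mulr0.
by rewrite IH mulrDr; case: ifP; rewrite ?mulr0.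
Qed.

Lemma lin_scale c A : lin (scaleL c A) = lin A *~ c.
Proof. by apply/ffunP => s; rewrite ffunMzE !ffunE cfL_scale mulrzz mulrC. Qed.

Lemma lin_flatten (l : seq (seq (int * seq nat))) : lin (flatten l) = \sum_(L <- l) lin L.
Proof.
elim: l => [|L l IH] /=; first by rewrite big_nil lin_nil.
by rewrite big_cons lin_cat IH.
Qed.

Lemma zmulDl (x y z : ZS 6) : zmul (x + y) z = zmul x z + zmul y z.
Proof.
apply/ffunP => s; rewrite !ffunE -big_split /=; apply: eq_bigr => t _.
by rewrite ffunE mulrDl.
Qed.

Lemma zmul0 (z : ZS 6) : zmul 0 z = 0.
Proof. by apply/ffunP => s; rewrite !ffunE big1 // => t _; rewrite ffunE mul0r. Qed.

Lemma cfL_mul1 a B s : perm_eq a.2 (iota 0 6) -> validL B ->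
  cfL [seq (a.1 * b.1, compose a.2 b.2) | b <- B] (gr s) =
  a.1 * cfL B (gr ((pg a.2)^-1 * s)%g).
Proof.
move=> va; elim: B => [|b B IH] /=; first by rewrite mulr0.
move=> /andP [vb vB]; rewrite IH // mulrDr; congr (_ + _).
have -> : compose a.2 b.2 = gr (pg a.2 * pg b.2)%g by rewrite gr_mul !gr_pg.
rewrite (inj_eq gr_inj) -{2}(gr_pg vb) (inj_eq gr_inj).
have -> : (pg a.2 * pg b.2 == s)%g = (pg b.2 == (pg a.2)^-1 * s)%g.
  apply/eqP/eqP => [<-|->]; by rewrite ?mulKg ?mulKVg.
by case: ifP; rewrite ?mulr0.
Qed.

Lemma zmul_lin A B : validL A -> validL B -> zmul (lin A) (lin B) = lin (mulL A B).
Proof.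
elim: A => [|a A IH] /= => [_ vB|/andP [va vA] vB]; first by rewrite lin_nil zmul0.
rewrite -cat1s lin_cat zmulDl IH // /mulL /= lin_cat; congr (_ + _).
apply/ffunP => s; rewrite !ffunE cfL_mul1 //.
rewrite -(@sum_ind _ a.2 va (fun t => a.1 * cfL B (gr (t^-1 * s)%g))).
apply: eq_bigr => t _; rewrite !ffunE /= addr0 eq_sym.
by case: ifP; rewrite ?mul0r.
Qed.

Lemma sum_lin (R : pzRingType) L (h : {perm 'I_6} -> R) : validL L ->
  \sum_(s : {perm 'I_6}) (lin L s)%:~R * h s = \sum_(p <- L) p.1%:~R * h (pg p.2).
Proof.
elim: L => [|p L IH] /=; first by rewrite big_nil big1 // => s _; rewrite ffunE mul0r.
move=> /andP [vp vL]; rewrite big_cons -IH // -(@sum_ind _ p.2 vp (fun s => p.1%:~R * h s)).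
rewrite -big_split /=; apply: eq_bigr => s _; rewrite !ffunE /= intrD mulrDl.
by congr (_ + _); case: ifP; rewrite ?mul0r.
Qed.

Lemma K33n_lt : all (fun p => (p.1 < 6) && (p.2 < 6))%N K33n.
Proof. by []. Qed.

Lemma K33_nth (e : 'I_9) (d : 'I_6 * 'I_6) :
  nth d K33 e = (inord (nth (0,0)%N K33n e).1, inord (nth (0,0)%N K33n e).2).
Proof.
case: e => [[|[|[|[|[|[|[|[|[|k]]]]]]]]] Hk] //=.
Qed.

Lemma inord_eq (a : nat) (u : 'I_6) : (a < 6)%N -> (inord a == u) = (a == u :> nat).
Proof. by move=> Ha; rewrite -(inj_eq (@ord_inj 6)) inordK. Qed.

Lemma K33n_nth_lt (e : 'I_9) : ((nth (0,0) K33n e).1 < 6)%N && ((nth (0,0) K33n e).2 < 6)%N.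
Proof. by case: e => [[|[|[|[|[|[|[|[|[|k]]]]]]]]] Hk]. Qed.

Lemma edge_relE (F : {set 'I_9}) (u v : 'I_6) :
  @edge_rel 6 K33 F u v = [exists e in F, edgeN (nth (0,0)%N K33n e) u v].
Proof.
apply: eq_existsb => e; congr (_ && _).
have /andP [H1 H2] := K33n_nth_lt e.
rewrite K33_nth /edgeN !xpair_eqE !inord_eq //.
Qed.

Section Conn.
Variables (F : {set 'I_9}) (Fn : seq nat).
Hypothesis hF : forall e : 'I_9, (e \in F) = (nat_of_ord e \in Fn).
Hypothesis hFn : all (fun i => i < 9)%N Fn.
Hypothesis cl : closedN Fn.

Lemma edge_relN (u v : 'I_6) : @edge_rel 6 K33 F u v = rN Fn u v.
Proof.
rewrite edge_relE; apply/existsP/hasP => [[e /andP [He Hr]]|[i Hi Hr]].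
  by exists (nat_of_ord e); rewrite -?hF.
have Hi9 : (i < 9)%N by move/allP: hFn; apply.
exists (inord i); rewrite hF inordK //; exact/andP.
Qed.

Lemma iter_step_in k a : a \in iter k (stepN Fn) [:: a].
Proof.
elim: k => [|k IH] /=; first by rewrite mem_seq1.
by rewrite /stepN mem_cat IH.
Qed.

Lemma iter_conn k (x : 'I_6) j : j \in iter k (stepN Fn) [:: nat_of_ord x] ->
  (j < 6)%N && connect (@edge_rel 6 K33 F) x (inord j).
Proof.
elim: k j => [|k IH] j.
  by rewrite [iter 0 _ _]/= mem_seq1 => /eqP ->; rewrite ltn_ord inord_val connect0.
rewrite iterS {1}/stepN mem_cat => /orP [/IH //|].
rewrite mem_filter mem_iota add0n => /andP [/hasP [i Hi Hr] /andP [_ Hj]]; rewrite Hj.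
have /andP [Hi6 Hc] := IH i Hi.
apply: (connect_trans Hc); apply: connect1.
by rewrite edge_relN !inordK.
Qed.

Lemma closedP a b c : (a < 6)%N -> (b < 6)%N -> (c < 6)%N ->
  b \in nth [::] (comps Fn) a -> rN Fn b c -> c \in nth [::] (comps Fn) a.
Proof.
move=> Ha Hb Hc; move: cl; rewrite /closedN => /allP /(_ a).
rewrite mem_iota add0n Ha => /(_ isT) /allP /(_ b).
rewrite mem_iota add0n Hb => /(_ isT) /allP /(_ c).
rewrite mem_iota add0n Hc => /(_ isT).
by move=> H H1 H2; move: H; rewrite H1 H2.
Qed.

Lemma comps_nth (x : 'I_6) : nth [::] (comps Fn) x = iter 6 (stepN Fn) [:: nat_of_ord x].
Proof. rewrite /comps (nth_map 0%N); last by rewrite size_iota. by rewrite nth_iota. Qed.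

Lemma connN (x y : 'I_6) :
  connect (@edge_rel 6 K33 F) x y = (nat_of_ord y \in nth [::] (comps Fn) x).
Proof.
rewrite comps_nth; apply/idP/idP; last first.
  by move/iter_conn => /andP [_]; rewrite inord_val.
have H : forall p (w : 'I_6), path (@edge_rel 6 K33 F) w p ->
    nat_of_ord w \in iter 6 (stepN Fn) [:: nat_of_ord x] ->
    nat_of_ord (last w p) \in iter 6 (stepN Fn) [:: nat_of_ord x].
  elim=> [|z p IH] w; first by [].
  rewrite [path _ _ _]/= [last _ _]/= => /andP [Hwz Hp] Hw; apply: IH => //.
  have := @closedP x w z (ltn_ord x) (ltn_ord w) (ltn_ord z).
  rewrite comps_nth -edge_relN.
  by move/(_ Hw Hwz).
move/connectP => [p Hp ->]; apply: H => //; exact: iter_step_in.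
Qed.

Lemma in_SbetaE s : @in_Sbeta 6 K33 F s = [forall x, connect (@edge_rel 6 K33 F) x (s x)].
Proof.
apply/forallP/forallP => H x.
  have : s x \in @block 6 K33 F x.
    by rewrite -(eqP (H x)); apply: imset_f; rewrite inE connect0.
  by rewrite inE.
rewrite eqEcard card_imset ?leqnn ?andbT; last exact: perm_inj.
apply/subsetP => _ /imsetP [y Hy ->]; rewrite /block !inE in Hy *.
exact: connect_trans Hy (H y).
Qed.

Lemma cfL_ones (l : seq (seq nat)) h : cfL [seq (1%:Z, g) | g <- l] h = (count_mem h l)%:Z.
Proof.
elim: l => [|g l IH] //=; rewrite IH eq_sym.
by case: (h == g) => /=; rewrite ?add0n ?addr0 // PoszD addrC.
Qed.

Lemma aFE : @aF 6 K33 F = lin (GLn Fn).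
Proof.
have GLnE : GLn Fn = [seq (1%:Z, g) | g <- PLnat & QC (comps Fn) g] by [].
apply/ffunP => s; rewrite !ffunE GLnE cfL_ones count_uniq_mem; last first.
  by apply: filter_uniq; apply: permutations_uniq.
rewrite mem_filter gr_PL andbT in_SbetaE.
suff -> : [forall x, connect (@edge_rel 6 K33 F) x (s x)] = QC (comps Fn) (gr s).
  by case: (QC _ _).
apply/forallP/allP => H.
  move=> i; rewrite mem_iota add0n /= => Hi; have := H (inord i).
  by rewrite connN -nth_gr inordK.
move=> x; have := H x; rewrite mem_iota ltn_ord => /(_ isT).
by rewrite connN nth_gr.
Qed.
End Conn.

Lemma aF1 (e : 'I_9) : @aF 6 K33 [set e] = lin (GLn [:: nat_of_ord e]).
Proof.
apply: aFE.
- by move=> i; rewrite in_set1 mem_seq1 (inj_eq (@ord_inj 9)).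
- by rewrite /= ltn_ord.
- by move/allP: closed_chk1; apply; rewrite mem_iota ltn_ord.
Qed.

Lemma aF2 (e f : 'I_9) : @aF 6 K33 [set e; f] = lin (GLn [:: nat_of_ord e; nat_of_ord f]).
Proof.
apply: aFE.
- by move=> i; rewrite !inE !(inj_eq (@ord_inj 9)).
- by rewrite /= !ltn_ord.
- move/allP: closed_chk2 => /(_ e); rewrite mem_iota ltn_ord => /(_ isT).
  by move/allP; apply; rewrite mem_iota ltn_ord.
Qed.

Lemma intr_sum (R : pzRingType) (I : Type) (r : seq I) (P : pred I) (F : I -> int) :
  (\sum_(i <- r | P i) F i)%:~R = \sum_(i <- r | P i) (F i)%:~R :> R.
Proof. by apply: (big_morph (fun z : int => z%:~R : R) (intrD R)). Qed.

Lemma natZ2 n : (n%:R : 'Z_2) = (odd n)%:R.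
Proof. by apply/val_inj; rewrite /= !Zp_nat /= modn2; case: (odd n). Qed.

Lemma sgnZ2 k : ((((-1) ^+ k : int))%:~R : 'Z_2) = 1.
Proof.
elim: k => [|k IH]; first by rewrite expr0.
by rewrite exprS intrM IH mulr1; apply/val_inj.
Qed.

Lemma valid_mulL A B : validL A -> validL B -> validL (mulL A B).
Proof.
move=> /allP vA /allP vB; apply/allP => p /flatten_mapP [a Ha] /mapP [b Hb ->] /=.
rewrite -(gr_pg (vA a Ha)) -(gr_pg (vB b Hb)) -gr_mul; exact: valid_gr.
Qed.

Lemma valid_GLn Fn : validL (GLn Fn).
Proof.
apply/allP => p; rewrite /GLn => /mapP [g]; rewrite mem_filter => /andP [_ Hg] -> /=.
by rewrite -mem_permutations.
Qed.

Definition U2 (e : nat) (s : {perm 'I_6}) : 'Z_2 :=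
  (uN e (nth 0%N (gr s) 0) (nth 0%N (gr s) 2))%:R.

Definition Psi (c : chain K33) : 'Z_2 :=
  \sum_(e : 'I_9) \sum_(s : {perm 'I_6}) (c [set e] s)%:~R * U2 e s.

Lemma pair_sum (R : nmodType) (A : 'I_9 -> 'I_9 -> R) :
  \sum_(e : 'I_9) \sum_(f : 'I_9 | f \notin [set e]) A e f =
  \sum_(e : 'I_9) \sum_(f : 'I_9 | (e < f)%N) (A e f + A f e).
Proof.
have E1 : forall e : 'I_9, \sum_(f : 'I_9 | f \notin [set e]) A e f =
    \sum_(f : 'I_9 | (e < f)%N) A e f + \sum_(f : 'I_9 | (f < e)%N) A e f.
  move=> e; rewrite (bigID (fun f : 'I_9 => (e < f)%N)) /=; congr (_ + _); apply: eq_bigl => f.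
    rewrite in_set1 -val_eqE; by case: eqP => // ->; rewrite ltnn.
  by rewrite in_set1 -val_eqE -leqNgt [(f < e)%N]ltn_neqAle.
rewrite (eq_bigr _ (fun e _ => E1 e)) big_split /=.
have -> : \sum_(e : 'I_9) \sum_(f : 'I_9 | (e < f)%N) (A e f + A f e) =
   \sum_(e : 'I_9) \sum_(f : 'I_9 | (e < f)%N) A e f + \sum_(e : 'I_9) \sum_(f : 'I_9 | (e < f)%N) A f e.
  by rewrite -big_split; apply: eq_bigr => e _; rewrite big_split.
congr (_ + _).
transitivity (\sum_(e : 'I_9) \sum_(f : 'I_9) (if (f < e)%N then A e f else 0)).
  by apply: eq_bigr => e _; rewrite big_mkcond.
rewrite exchange_big /=; apply: eq_bigr => e _; by rewrite [RHS]big_mkcond.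
Qed.

Lemma par_lem (e f a b : nat) : (e < 9)%N -> (f < 9)%N -> (a < 6)%N -> (b < 6)%N ->
  ~~ odd (sumn [seq uN e (nth 0%N p.2 a) (nth 0%N p.2 b) + uN f (nth 0%N p.2 a) (nth 0%N p.2 b)
                | p <- GLn [:: e; f]]).
Proof.
move=> He Hf Ha Hb; have := par_chk; rewrite /parchk.
move/allP/(_ e); rewrite mem_iota He => /(_ isT).
move/allP/(_ f); rewrite mem_iota Hf => /(_ isT).
cbv zeta.
move/allP/(_ a); rewrite mem_iota Ha => /(_ isT).
move/allP/(_ b); rewrite mem_iota Hb => /(_ isT).
by [].
Qed.

Lemma sum_natr (R : pzSemiRingType) (I : Type) (L : seq I) (N : I -> nat) :
  \sum_(p <- L) (N p)%:R = (sumn [seq N p | p <- L])%:R :> R.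
Proof.
elim: L => [|p L IH]; first by rewrite big_nil.
by rewrite big_cons IH /= natrD.
Qed.

Lemma nth_compose (h g : seq nat) i : (i < size h)%N ->
  nth 0%N (compose h g) i = nth 0%N g (nth 0%N h i).
Proof. by move=> Hi; rewrite /compose (nth_map 0%N). Qed.

Lemma U2_mul e t g : perm_eq g (iota 0 6) ->
  U2 e (t * pg g)%g = (uN e (nth 0%N g (nth 0%N (gr t) 0)) (nth 0%N g (nth 0%N (gr t) 2)))%:R.
Proof. by move=> vg; rewrite /U2 gr_mul gr_pg // !nth_compose ?size_gr. Qed.

Lemma key_sum (e f : 'I_9) (z : ZS 6) :
  \sum_(s : {perm 'I_6}) ((zmul z (@aF 6 K33 [set e; f])) s)%:~R * (U2 e s + U2 f s) = 0 :> 'Z_2.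
Proof.
rewrite aF2.
transitivity (\sum_(t : {perm 'I_6}) (z t)%:~R *
   \sum_(s : {perm 'I_6}) ((lin (GLn [:: nat_of_ord e; nat_of_ord f])) s)%:~R * (U2 e (t * s)%g + U2 f (t * s)%g)).
  under eq_bigr do rewrite ffunE intr_sum mulr_suml.
  rewrite exchange_big /=; apply: eq_bigr => t _.
  rewrite mulr_sumr (reindex_inj (mulgI t)) /=; apply: eq_bigr => s _.
  by rewrite mulKg intrM mulrA.
rewrite big1 // => t _.
rewrite sum_lin ?valid_GLn //.
have Ha : (nth 0%N (gr t) 0 < 6)%N by apply: (valid_lt (valid_gr t)).
have Hb : (nth 0%N (gr t) 2 < 6)%N by apply: (valid_lt (valid_gr t)).
set a := nth 0%N (gr t) 0; set b := nth 0%N (gr t) 2.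
rewrite (@eq_big_seq _ _ _ _ _ _
  (fun p : int * seq nat => (uN e (nth 0%N p.2 a) (nth 0%N p.2 b) + uN f (nth 0%N p.2 a) (nth 0%N p.2 b))%:R)).
  by rewrite sum_natr natZ2 (negbTE (par_lem (ltn_ord e) (ltn_ord f) Ha Hb)) mulr0.
move=> p Hp; have /allP /(_ p Hp) vp := valid_GLn [:: nat_of_ord e; nat_of_ord f].
rewrite !U2_mul // natrD.
move: Hp; rewrite /GLn => /mapP [g _ ->] /=.
by rewrite mul1r.
Qed.

Lemma psi_bd (y : chain K33) : is_chain 2 y -> Psi (bd y) = 0.
Proof.
move=> [_ HM]; rewrite /Psi.
transitivity (\sum_(e : 'I_9) \sum_(f : 'I_9 | f \notin [set e])
   \sum_(s : {perm 'I_6}) (y (f |: [set e]) s)%:~R * U2 e s).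
  apply: eq_bigr => e _.
  under eq_bigr do rewrite ffunE sum_ffunE intr_sum mulr_suml.
  rewrite exchange_big /=; apply: eq_bigr => f _; apply: eq_bigr => s _.
  by rewrite ffunMzE mulrzz intrM sgnZ2 mulr1.
rewrite pair_sum big1 // => e _; rewrite big1 // => f Hef.
have E1 : f |: [set e] = [set e; f] by rewrite setUC.
rewrite E1 -big_split /=.
have [z Hz] := HM [set e; f].
under eq_bigr do rewrite -mulrDr.
rewrite Hz; exact: key_sum.
Qed.

Lemma valid_WL i : (i < 9)%N -> validL (WL i).
Proof.
move=> Hi; move: valid_chk => /andP [/allP H _]; apply: H; by rewrite mem_iota.
Qed.

Lemma valid_ZL i j : validL (ZL i j).
Proof.
move: valid_chk => /andP [_ /allP H]; apply/allP => p; rewrite /ZL => /mapP [q].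
rewrite mem_filter => /andP [_ Hq] ->; apply: H; apply/mapP; by exists q.
Qed.

Lemma valid_XL i : (i < 9)%N -> validL (XL i).
Proof. by move=> Hi; apply: valid_mulL; [exact: valid_WL | exact: valid_GLn]. Qed.

Definition XF (F : {set 'I_9}) : seq (int * seq nat) :=
  if [pick e in F] is Some e then XL (nat_of_ord e) else [::].
Definition xc : chain K33 := [ffun F : {set 'I_9} => if #|F| == 1%N then lin (XF F) else 0].

Lemma XF1 (e : 'I_9) : XF [set e] = XL e.
Proof.
rewrite /XF; case: pickP => [i|H]; first by rewrite in_set1 => /eqP ->.
by have := H e; rewrite in_set1 eqxx.
Qed.

Lemma xc1 (e : 'I_9) : xc [set e] = lin (XL e).
Proof. by rewrite ffunE cards1 eqxx XF1. Qed.

Lemma xc_chain : is_chain 1 xc.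
Proof.
split.
  by move=> F HF; rewrite ffunE; case: eqP.
move=> F; rewrite ffunE; case: (boolP (#|F| == 1%N)) => [/cards1P [e ->]|_].
  exists (lin (WL e)); rewrite XF1 (aF1 e) zmul_lin //; [exact: (valid_WL (ltn_ord e)) | exact: valid_GLn].
by exists 0; rewrite zmul0.
Qed.

Lemma sum_ord9 (V : nmodType) (G : nat -> V) :
  \sum_(e : 'I_9) G e = \sum_(i <- iota 0 9) G i.
Proof. by rewrite -(big_mkord xpredT) /index_iota subn0. Qed.

Lemma xc_cycle : bd xc = 0.
Proof.
apply/ffunP => F; rewrite ffunE [RHS]ffunE.
case: (set_0Vmem F) => [->|[g Hg]].
  transitivity (\sum_(e : 'I_9) lin (XL e)).
    apply: eq_big => [e|e _]; first by rewrite in_set0.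
    have -> : [set f in e |: set0 | (f < e)%N] = set0.
      apply/setP => f; rewrite !inE orbF; apply/negP => /andP [/eqP -> ]; by rewrite ltnn.
    by rewrite setU0 xc1 cards0 expr0 mulr1z.
  rewrite (sum_ord9 (fun i => lin (XL i))) -(big_map XL xpredT lin) -lin_flatten.
  by rewrite (lin_eq cycle_chk) lin_nil.
rewrite big1 // => e He.
rewrite ffunE cardsU1 He /= add1n eqSS.
have : (0 < #|F|)%N by apply/card_gt0P; exists g.
by case: #|F| => // n _; rewrite mul0rz.
Qed.

Lemma psi_term (e : nat) (p : int * seq nat) : perm_eq p.2 (iota 0 6) ->
  (p.1 * (uN e (nth 0%N p.2 0) (nth 0%N p.2 2))%:Z)%:~R = p.1%:~R * U2 e (pg p.2) :> 'Z_2.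
Proof.
move=> vp; rewrite intrM /U2 gr_pg //; congr (_ * _); exact: (esym (pmulrn 1 _)).
Qed.

Lemma Hfold (I : Type) (l : seq I) (G : I -> int) :
    foldr (fun x acc => G x + acc) 0 l = \sum_(x <- l) G x.
Proof. elim: l => [|a l IH] /=; by rewrite ?big_nil ?big_cons ?IH. Qed.

Lemma H23 : (\sum_(e : 'I_9) (Gpsi e)%:~R) = (1 : 'Z_2).
Proof.
rewrite (sum_ord9 (fun e => (Gpsi e)%:~R)).
rewrite -intr_sum.
rewrite Gpsi_sum.
apply/val_inj.
by [].
Qed.

Lemma validL_mem L p : validL L -> p \in L -> perm_eq p.2 (iota 0 6).
Proof. by move/allP; apply. Qed.

Lemma pA (e : 'I_9) :
  \sum_(s : {perm 'I_6}) (lin (XL e) s)%:~R * U2 e s = \sum_(p <- XL e) p.1%:~R * U2 e (pg p.2) :> 'Z_2.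
Proof. exact: (sum_lin _ (valid_XL (ltn_ord e))). Qed.

Lemma pB (e : 'I_9) :
  \sum_(p <- XL e) (p.1 * (uN e (nth 0%N p.2 0) (nth 0%N p.2 2))%:Z)%:~R =
  \sum_(p <- XL e) p.1%:~R * U2 e (pg p.2) :> 'Z_2.
Proof.
apply: eq_big_seq => p Hp.
apply: psi_term; exact: (validL_mem (valid_XL (ltn_ord e)) Hp).
Qed.

Lemma pC (e : 'I_9) : (Gpsi e)%:~R =
  \sum_(p <- XL e) (p.1 * (uN e (nth 0%N p.2 0) (nth 0%N p.2 2))%:Z)%:~R :> 'Z_2.
Proof. by rewrite /Gpsi intr_sum. Qed.

Lemma psi_x : Psi xc = 1.
Proof.
rewrite -H23 /Psi; apply: eq_bigr => e _; by rewrite xc1 pA -pB pC.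
Qed.

Definition YF (F : {set 'I_9}) : seq (int * seq nat) :=
  if enum F is [:: a; b] then YL a b else [::].
Definition yc : chain K33 := [ffun F : {set 'I_9} => if #|F| == 2%N then lin (YF F) else 0].

Lemma enum2 (a b : 'I_9) : (a < b)%N -> enum [set a; b] = [:: a; b].
Proof.
move=> Hab.
have tr : transitive (fun u v : 'I_9 => (u < v)%N) by move=> u v w; apply: ltn_trans.
apply: (irr_sorted_eq tr (fun u : 'I_9 => ltnn u)).
- rewrite /enum_mem -enumT; apply: sorted_filter => //.
  by have := iota_ltn_sorted 0 9; rewrite -val_enum_ord sorted_map.
- by rewrite /= Hab.
- by move=> u; rewrite mem_enum !inE.
Qed.

Lemma yc2 (a b : 'I_9) : (a < b)%N -> yc [set a; b] = lin (YL a b).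
Proof.
move=> H; rewrite ffunE cards2.
have -> : (a != b) by rewrite -val_eqE neq_ltn H.
by rewrite /= /YF enum2.
Qed.

Lemma yc_chain : is_chain 2 yc.
Proof.
split.
  by move=> F HF; rewrite ffunE; case: eqP.
move=> F; rewrite ffunE; case: (boolP (#|F| == 2%N)) => [/cards2P [a [b [Hab ->]]]|_]; last first.
  by exists 0; rewrite zmul0.
wlog lab : a b Hab / (a < b)%N.
  move=> W; case: (ltngtP a b) => H; first exact: W.
    by rewrite setUC; apply: W => //; rewrite eq_sym.
  by move: Hab; rewrite (ord_inj H) eqxx.
rewrite /= /YF enum2 //.
exists (lin (ZL a b)); rewrite aF2 zmul_lin //; [exact: valid_ZL | exact: valid_GLn].
Qed.

Lemma sgn_set (e f : 'I_9) : e != f ->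
  #|[set g in e |: [set f] | (g < e)%N]| = (f < e)%N.
Proof.
move=> Hef; case Hfe: (f < e)%N.
  have -> : [set g in e |: [set f] | (g < e)%N] = [set f].
    apply/setP => g; rewrite !inE; case: (eqVneq g f) => [->|Hgf]; first by rewrite Hfe orbT.
    by rewrite orbF andbC; case: (eqVneq g e) => [->|]; rewrite ?ltnn ?andbF.
  by rewrite cards1.
have -> : [set g in e |: [set f] | (g < e)%N] = set0.
  apply/setP => g; rewrite !inE; case: (eqVneq g f) => [->|Hgf]; first by rewrite Hfe andbF.
  by rewrite orbF; case: (eqVneq g e) => [->|]; rewrite ?ltnn ?andbF.
by rewrite cards0.
Qed.

Lemma bd_term (e f : 'I_9) : e != f ->
  yc (e |: [set f]) *~ ((-1) ^+ #|[set g in e |: [set f] | (g < e)%N]|) =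
  lin (scaleL (if (f < e)%N then -1 else 1) (YL (minn f e) (maxn f e))).
Proof.
move=> Hef; rewrite sgn_set // lin_scale; case: (ltngtP f e) => H.
- have -> : e |: [set f] = [set f; e] by rewrite setUC.
  rewrite (yc2 H).
  by rewrite -[nat_of_bool true]/1%N expr1.
- rewrite (yc2 H).
  by rewrite -[nat_of_bool false]/0%N expr0.
- by move: Hef; rewrite (ord_inj H) eqxx.
Qed.

Lemma yc_bd : bd yc = xc *+ 2.
Proof.
apply/ffunP => F; rewrite ffunMnE ffunE.
case: (boolP (#|F| == 1%N)) => [/cards1P [f ->]|HF]; last first.
  rewrite big1; last first.
    move=> e He; rewrite ffunE cardsU1 He add1n eqSS (negbTE HF).
    by rewrite mul0rz.
  by rewrite ffunE (negbTE HF) mul0rn.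
rewrite xc1.
pose T := fun j : nat => scaleL (if (f < j)%N then -1 else 1) (YL (minn f j) (maxn f j)).
transitivity (\sum_(e : 'I_9 | e \notin [set f]) lin (T e)).
  apply: eq_bigr => e He; apply: bd_term; by rewrite in_set1 in He.
transitivity (lin (BL f)).
  rewrite /BL lin_flatten big_map big_filter.
  rewrite (eq_bigl (fun e : 'I_9 => nat_of_ord e != nat_of_ord f)); last first.
    by move=> e; rewrite in_set1 val_eqE.
  by rewrite -(big_mkord (fun j => j != nat_of_ord f) (fun j => lin (T j))) /index_iota subn0.
rewrite (lin_eq (allP bd_chk f _)); last by rewrite mem_iota ltn_ord.
by rewrite lin_cat mulr2n.
Qed.

Theorem theorem4p2 : H1_has_2torsion K33.
Proof.
exists xc; split.
- exact: xc_chain.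
- exact: xc_cycle.
- move=> [y [Hy Hb]]; have := psi_bd Hy; rewrite Hb psi_x.
  by move/eqP; rewrite oner_eq0.
- exists yc; split; [exact: yc_chain | exact: yc_bd].
Qed.
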